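(* Let $f(u,\bar u)=\sum_{\nu,\mu}c_{\nu,\mu}u^\nu\bar u^\mu$ be a mixed polynomial in one complex variable $u$. (1) If $f$ is admissible at infinity and its zero set $V(f)=\{\alpha\in\mathbb C: f(\alpha,\bar\alpha)=0\}$ is finite, then $\operatorname{SM}(f)=\beta(f)$. (2) If $f$ is admissible at the origin and $f(0,0)=0$, then $\operatorname{sm}(f,0)=\rho(f,0)$.
   Context: Let $\bar d=\max\{\nu+\mu: c_{\nu,\mu}\ne0\}$ and $\underline d=\min\{\nu+\mu:c_{\nu,\mu}\ne0\}$, and for $\ell\ge0$ let $f_\ell=\sum_{\nu+\mu=\ell}c_{\nu,\mu}u^\nu\bar u^\mu$. There are unique factorizations $f_{\bar d}(u,\bar u)=c\,u^p\bar u^q\prod_{j=1}^s(u+\gamma_j\bar u)^{\nu_j}$ with $c\ne0$, $p,q\ge0$, $\nu_j\ge1$, $p+q+\sum\nu_j=\bar d$, and $\gamma_1,\dots,\gamma_s$ distinct non-zero complex numbers; and $f_{\underline d}(u,\bar u)=c'u^{a}\bar u^{b}\prod_{j=1}^{s'}(u+\delta_j\bar u)^{\mu_j}$ with $c'\ne0$, $a+b+\sum\mu_j=\underline d$, $\delta_1,\dots,\delta_{s'}$ distinct non-zero complex numbers. $f$ is admissible at infinity if $|\gamma_j|\ne1$ for all $j$, and admissible at the origin if $|\delta_j|\ne1$ for all $j$. For non-zero $\xi\in\mathbb C$ let $\varepsilon(\xi)=1$ if $|\xi|<1$, $0$ if $|\xi|=1$, $-1$ if $|\xi|>1$. Define $\beta(f)=p-q+\sum_{j=1}^s\varepsilon(\gamma_j)\nu_j$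 and $\rho(f,0)=a-b+\sum_{j=1}^{s'}\varepsilon(\delta_j)\mu_j$. For an isolated root $\alpha$ of $f$, $\operatorname{sm}(f,\alpha)$ is the mapping degree of $f/|f|:\{|u-\alpha|=r\}\to S^1$ for small $r>0$ (circle oriented counterclockwise), and $\operatorname{SM}(f)=\sum_{\alpha\in V(f)}\operatorname{sm}(f,\alpha)$. *)

(* Defs.v *)
From Stdlib Require Import Reals ZArith List ClassicalEpsilon.
From Coquelicot Require Import Coquelicot.
Import ListNotations.
Open Scope R_scope.

(** A mixed polynomial f(u, ubar) = sum c_{nu,mu} u^nu ubar^mu, with
    coefficients c : nat -> nat -> C supported in [0..N] x [0..N]. *)
Definition mixed_supported (c : nat -> nat -> C) (N : nat) : Prop :=
  forall nu mu, (N < nu)%nat \/ (N < mu)%nat -> c nu mu = RtoC 0.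

Fixpoint csum (n : nat) (F : nat -> C) : C :=
  match n with
  | O => F O
  | S k => Cplus (csum k F) (F (S k))
  end.

Definition feval (c : nat -> nat -> C) (N : nat) (u : C) : C :=
  csum N (fun nu => csum N (fun mu =>
     Cmult (c nu mu) (Cmult (Cpow u nu) (Cpow (Cconj u) mu)))).

Definition fhom (c : nat -> nat -> C) (N : nat) (l : nat) (u : C) : C :=
  csum N (fun nu => csum N (fun mu =>
     if Nat.eqb (nu + mu) l
     then Cmult (c nu mu) (Cmult (Cpow u nu) (Cpow (Cconj u) mu))
     else RtoC 0)).

Definition is_top_degree (c : nat -> nat -> C) (d : nat) : Prop :=
  (exists nu mu, (nu + mu)%nat = d /\ c nu mu <> RtoC 0) /\
  (forall nu mu, c nu mu <> RtoC 0 -> (nu + mu <= d)%nat).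

Definition is_bottom_degree (c : nat -> nat -> C) (d : nat) : Prop :=
  (exists nu mu, (nu + mu)%nat = d /\ c nu mu <> RtoC 0) /\
  (forall nu mu, c nu mu <> RtoC 0 -> (d <= nu + mu)%nat).

(** a factorization  k u^p ubar^q prod_j (u + g_j ubar)^{n_j}, with the
    data (g_j, n_j) listed in fac *)
Definition factored (k : C) (p q : nat) (fac : list (C * nat)%type) (u : C) : C :=
  Cmult (Cmult k (Cmult (Cpow u p) (Cpow (Cconj u) q)))
    (fold_right (fun gn acc =>
        Cmult (Cpow (Cplus u (Cmult (fst gn) (Cconj u))) (snd gn)) acc)
      (RtoC 1) fac).

Definition valid_factorization (k : C) (fac : list (C * nat)%type) : Prop :=
  k <> RtoC 0 /\ NoDup (map fst fac) /\
  List.Forall (fun gn => fst gn <> RtoC 0 /\ (1 <= snd gn)%nat) fac.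

Definition admissible_fac (fac : list (C * nat)%type) : Prop :=
  List.Forall (fun gn => Cmod (fst gn) <> 1) fac.

Definition eps (xi : C) : Z :=
  match Rlt_dec (Cmod xi) 1 with
  | left _ => 1%Z
  | right _ => match Rgt_dec (Cmod xi) 1 with
               | left _ => (-1)%Z
               | right _ => 0%Z
               end
  end.

(** p - q + sum_j eps(g_j) n_j : this is beta(f) (resp. rho(f,0)) for the
    factorization of f_dbar (resp. f_dlow) *)
Definition index_of_fac (p q : nat) (fac : list (C * nat)%type) : Z :=
  (Z.of_nat p - Z.of_nat q +
   fold_right (fun gn acc => (eps (fst gn) * Z.of_nat (snd gn) + acc)%Z) 0%Z fac)%Z.

Definition circ (a : C) (r t : R) : C :=
  Cplus a (Cmult (RtoC r) (cos (2 * PI * t), sin (2 * PI * t))).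

(** g/|g| restricted to the circle |u - a| = r has mapping degree d:
    g does not vanish on the circle, and g/|g| admits a continuous angle
    lift th with total increase 2 pi d. *)
Definition circle_degree (g : C -> C) (a : C) (r : R) (d : Z) : Prop :=
  (forall t, 0 <= t <= 1 -> g (circ a r t) <> RtoC 0) /\
  exists th : R -> R,
    (forall t, continuity_pt th t) /\
    (forall t, 0 <= t <= 1 ->
       g (circ a r t) = Cmult (RtoC (Cmod (g (circ a r t)))) (cos (th t), sin (th t))) /\
    th 1 - th 0 = 2 * PI * IZR d.

Definition has_sm (g : C -> C) (a : C) (k : Z) : Prop :=
  exists r0, 0 < r0 /\ forall r, 0 < r < r0 -> circle_degree g a r k.

Definition sm (g : C -> C) (a : C) : Z :=
  epsilon (inhabits 0%Z) (has_sm g a).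

Definition SM (g : C -> C) (V : list C) : Z :=
  fold_right (fun a acc => (sm g a + acc)%Z) 0%Z V.

(* Main.v *)
Require Import Defs.
From Stdlib Require Import Reals ZArith List Lra Lia ClassicalEpsilon FunctionalExtensionality Bool.
From Coquelicot Require Import Coquelicot.
Import ListNotations.
Open Scope R_scope.

Definition ex (t : R) : C := (cos t, sin t).

Lemma Ceq (u v : C) : fst u = fst v -> snd u = snd v -> u = v.
Proof. destruct u, v; simpl; intros; subst; auto. Qed.

Lemma ex_add a b : ex (a + b) = Cmult (ex a) (ex b).
Proof. unfold ex, Cmult; apply Ceq; simpl; [rewrite cos_plus|rewrite sin_plus]; ring. Qed.

Lemma Cmod_ex t : Cmod (ex t) = 1.
Proof. unfold Cmod, ex; cbn [fst snd]. replace (cos t ^ 2 + sin t ^ 2) with 1.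
 apply sqrt_1. rewrite <- (sin2_cos2 t). unfold Rsqr; ring. Qed.

Lemma Cmod_sq (z : C) : Cmod z * Cmod z = fst z * fst z + snd z * snd z.
Proof. unfold Cmod. rewrite sqrt_sqrt. simpl; ring. simpl; nra. Qed.

Lemma Cmod_lt_sq (u v : C) : Cmod u < Cmod v ->
  fst u * fst u + snd u * snd u < fst v * fst v + snd v * snd v.
Proof. intros H. rewrite <- !Cmod_sq. pose proof (Cmod_ge_0 u). nra. Qed.

Lemma Cmod_le_sq (u v : C) : Cmod u <= Cmod v ->
  fst u * fst u + snd u * snd u <= fst v * fst v + snd v * snd v.
Proof. intros H. rewrite <- !Cmod_sq. pose proof (Cmod_ge_0 u). nra. Qed.

Lemma sq_lt_Cmod (u v : C) :
  fst u * fst u + snd u * snd u < fst v * fst v + snd v * snd v -> Cmod u < Cmod v.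
Proof. intros H. rewrite <- !Cmod_sq in H. pose proof (Cmod_ge_0 u). pose proof (Cmod_ge_0 v). nra. Qed.

Lemma sq_le_Cmod (u v : C) :
  fst u * fst u + snd u * snd u <= fst v * fst v + snd v * snd v -> Cmod u <= Cmod v.
Proof. intros H. rewrite <- !Cmod_sq in H. pose proof (Cmod_ge_0 u). pose proof (Cmod_ge_0 v). nra. Qed.

Lemma Cmod_fst (z : C) : Rabs (fst z) <= Cmod z.
Proof. pose proof (Cmod_sq z). pose proof (Cmod_ge_0 z). apply Rabs_le; split; nra. Qed.
Lemma Cmod_snd (z : C) : Rabs (snd z) <= Cmod z.
Proof. pose proof (Cmod_sq z). pose proof (Cmod_ge_0 z). apply Rabs_le; split; nra. Qed.

Lemma Cmod_le_sum (z : C) : Cmod z <= Rabs (fst z) + Rabs (snd z).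
Proof.
  pose proof (Cmod_ge_0 z). pose proof (Rabs_pos (fst z)). pose proof (Rabs_pos (snd z)).
  assert (Cmod z * Cmod z <= (Rabs (fst z) + Rabs (snd z)) * (Rabs (fst z) + Rabs (snd z))).
  { rewrite Cmod_sq. pose proof (Rsqr_abs (fst z)). pose proof (Rsqr_abs (snd z)).
    unfold Rsqr in *. nra. }
  nra.
Qed.

Lemma Cmod_RtoC_mult (r : R) z : Cmod (Cmult (RtoC r) z) = Rabs r * Cmod z.
Proof. rewrite Cmod_mult. f_equal. unfold Cmod, RtoC; simpl.
  replace (r * (r * 1) + 0 * (0 * 1)) with (r * r) by ring. apply sqrt_Rsqr_abs. Qed.

Lemma Cmod_RtoC r : Cmod (RtoC r) = Rabs r.
Proof. unfold Cmod, RtoC; simpl.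
  replace (r * (r * 1) + 0 * (0 * 1)) with (r * r) by ring. apply sqrt_Rsqr_abs. Qed.

Lemma ex_eq_int a b : ex a = ex b -> exists k : Z, a - b = 2 * PI * IZR k.
Proof.
  unfold ex; intros H. inversion H as [[Hc Hs]].
  set (d := a - b).
  assert (Hcd : cos d = 1).
  { unfold d. rewrite cos_minus, Hc, Hs. rewrite <- (sin2_cos2 b). unfold Rsqr; ring. }
  assert (Hsd : sin (d/2) = 0).
  { assert (cos (2 * (d/2)) = 1) by (replace (2*(d/2)) with d by field; auto).
    rewrite cos_2a_sin in H0. nra. }
  destruct (sin_eq_0_0 _ Hsd) as [k Hk]. exists k. lra.
Qed.

Lemma cont_eps (h : R -> R) t :
  (forall e, 0 < e -> exists d, 0 < d /\ forall s, Rabs (s - t) < d -> Rabs (h s - h t) < e) ->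
  continuity_pt h t.
Proof.
  intros H e He. destruct (H e He) as [d [Hd Hs]]. exists d; split; auto.
  intros x [_ Hx]. simpl in *. unfold R_dist in *. apply Hs; auto.
Qed.

Lemma eps_cont (h : R -> R) t : continuity_pt h t ->
  forall e, 0 < e -> exists d, 0 < d /\ forall s, Rabs (s - t) < d -> Rabs (h s - h t) < e.
Proof.
  intros H e He. destruct (H e He) as [d [Hd Hs]]. exists d; split; auto.
  intros s Hst. destruct (Req_dec s t) as [->|Hne].
  - rewrite Rminus_eq_0, Rabs_R0; auto.
  - apply (Hs s). split. split; [exact I| congruence]. simpl. unfold R_dist. auto.
Qed.

Definition ccont (g : R -> C) (t : R) : Prop :=
  forall e, 0 < e -> exists d, 0 < d /\ forall s, Rabs (s - t) < d -> Cmod (Cminus (g s) (g t)) < e.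

Lemma ccont_fst g t : ccont g t -> continuity_pt (fun s => fst (g s)) t.
Proof. intros H. apply cont_eps. intros e He. destruct (H e He) as [d [Hd Hs]].
  exists d; split; auto. intros s Hs'. eapply Rle_lt_trans; [|apply (Hs s Hs')].
  replace (fst (g s) - fst (g t)) with (fst (Cminus (g s) (g t))) by (simpl; ring). apply Cmod_fst. Qed.
Lemma ccont_snd g t : ccont g t -> continuity_pt (fun s => snd (g s)) t.
Proof. intros H. apply cont_eps. intros e He. destruct (H e He) as [d [Hd Hs]].
  exists d; split; auto. intros s Hs'. eapply Rle_lt_trans; [|apply (Hs s Hs')].
  replace (snd (g s) - snd (g t)) with (snd (Cminus (g s) (g t))) by (simpl; ring). apply Cmod_snd. Qed.

Lemma ccont_comp_pt g t : continuity_pt (fun s => fst (g s)) t -> continuity_pt (fun s => snd (g s)) t -> ccont g t.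
Proof.
  intros H1 H2 e He.
  destruct (eps_cont _ _ H1 (e/2)) as [d1 [Hd1 Hs1]]; [lra|].
  destruct (eps_cont _ _ H2 (e/2)) as [d2 [Hd2 Hs2]]; [lra|].
  exists (Rmin d1 d2); split. apply Rmin_pos; auto.
  intros s Hs. eapply Rle_lt_trans. apply Cmod_le_sum.
  simpl. pose proof (Hs1 s ltac:(eapply Rlt_le_trans; [apply Hs|apply Rmin_l])).
  pose proof (Hs2 s ltac:(eapply Rlt_le_trans; [apply Hs|apply Rmin_r])).
  replace (fst (g s) + - fst (g t)) with (fst (g s) - fst (g t)) by ring.
  replace (snd (g s) + - snd (g t)) with (snd (g s) - snd (g t)) by ring. lra.
Qed.

Lemma ccont_Cmod g t : ccont g t -> continuity_pt (fun s => Cmod (g s)) t.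
Proof. intros H. apply cont_eps. intros e He. destruct (H e He) as [d [Hd Hs]].
  exists d; split; auto. intros s Hs'. eapply Rle_lt_trans; [|apply (Hs s Hs')].
  pose proof (Cmod_triangle (Cminus (g s) (g t)) (g t)).
  pose proof (Cmod_triangle (Cminus (g t) (g s)) (g s)).
  replace (Cplus (Cminus (g s) (g t)) (g t)) with (g s) in H0 by ring.
  replace (Cplus (Cminus (g t) (g s)) (g s)) with (g t) in H1 by ring.
  replace (Cminus (g t) (g s)) with (Copp (Cminus (g s) (g t))) in H1 by ring.
  rewrite Cmod_opp in H1. apply Rabs_le. lra. Qed.

Lemma Cmod_sub_sym (u v : C) : Cmod (Cminus u v) = Cmod (Cminus v u).
Proof. replace (Cminus u v) with (Copp (Cminus v u)) by ring. apply Cmod_opp. Qed.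

Lemma Cmod_tri3 (u v w : C) : Cmod (Cminus u w) <= Cmod (Cminus u v) + Cmod (Cminus v w).
Proof. replace (Cminus u w) with (Cplus (Cminus u v) (Cminus v w)) by ring. apply Cmod_triangle. Qed.

Lemma ccont_const (z : C) t : ccont (fun _ => z) t.
Proof. intros e He. exists 1; split; [lra|]. intros s _. replace (Cminus z z) with (RtoC 0) by ring.
  rewrite Cmod_0; auto. Qed.

Lemma ccont_plus g h t : ccont g t -> ccont h t -> ccont (fun s => Cplus (g s) (h s)) t.
Proof.
  intros H1 H2 e He.
  destruct (H1 (e/2)) as [d1 [Hd1 Hs1]]; [lra|].
  destruct (H2 (e/2)) as [d2 [Hd2 Hs2]]; [lra|].
  exists (Rmin d1 d2); split. apply Rmin_pos; auto.
  intros s Hs. replace (Cminus (Cplus (g s) (h s)) (Cplus (g t) (h t))) with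
    (Cplus (Cminus (g s) (g t)) (Cminus (h s) (h t))) by ring.
  eapply Rle_lt_trans. apply Cmod_triangle.
  pose proof (Hs1 s ltac:(eapply Rlt_le_trans; [apply Hs|apply Rmin_l])).
  pose proof (Hs2 s ltac:(eapply Rlt_le_trans; [apply Hs|apply Rmin_r])). lra.
Qed.

Lemma ccont_opp g t : ccont g t -> ccont (fun s => Copp (g s)) t.
Proof. intros H e He. destruct (H e He) as [d [Hd Hs]]. exists d; split; auto.
  intros s Hs'. replace (Cminus (Copp (g s)) (Copp (g t))) with (Copp (Cminus (g s) (g t))) by ring.
  rewrite Cmod_opp; auto. Qed.

Lemma ccont_minus g h t : ccont g t -> ccont h t -> ccont (fun s => Cminus (g s) (h s)) t.
Proof. intros. apply ccont_plus; auto. apply ccont_opp; auto. Qed.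

Lemma ccont_conj g t : ccont g t -> ccont (fun s => Cconj (g s)) t.
Proof. intros H e He. destruct (H e He) as [d [Hd Hs]]. exists d; split; auto.
  intros s Hs'. replace (Cminus (Cconj (g s)) (Cconj (g t))) with (Cconj (Cminus (g s) (g t))).
  rewrite Cmod_conj; auto. apply Ceq; simpl; ring. Qed.

Lemma ccont_mult g h t : ccont g t -> ccont h t -> ccont (fun s => Cmult (g s) (h s)) t.
Proof.
  intros H1 H2 e He.
  set (K := Cmod (g t) + Cmod (h t) + 2).
  assert (HK : 0 < K) by (unfold K; pose proof (Cmod_ge_0 (g t)); pose proof (Cmod_ge_0 (h t)); lra).
  set (e1 := Rmin 1 (e / K)).
  assert (He1 : 0 < e1) by (apply Rmin_pos; [lra| apply Rdiv_lt_0_compat; auto]).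
  destruct (H1 e1 He1) as [d1 [Hd1 Hs1]].
  destruct (H2 e1 He1) as [d2 [Hd2 Hs2]].
  exists (Rmin d1 d2); split. apply Rmin_pos; auto.
  intros s Hs.
  pose proof (Hs1 s ltac:(eapply Rlt_le_trans; [apply Hs|apply Rmin_l])) as A.
  pose proof (Hs2 s ltac:(eapply Rlt_le_trans; [apply Hs|apply Rmin_r])) as B.
  replace (Cminus (Cmult (g s) (h s)) (Cmult (g t) (h t))) with
    (Cplus (Cmult (Cminus (g s) (g t)) (Cplus (Cminus (h s) (h t)) (h t)))
           (Cmult (g t) (Cminus (h s) (h t)))) by ring.
  eapply Rle_lt_trans. apply Cmod_triangle. rewrite !Cmod_mult.
  pose proof (Cmod_triangle (Cminus (h s) (h t)) (h t)) as T.
  pose proof (Cmod_ge_0 (Cminus (g s) (g t))) as P1. pose proof (Cmod_ge_0 (Cminus (h s) (h t))) as P2.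
  pose proof (Cmod_ge_0 (g t)) as P3. pose proof (Cmod_ge_0 (h t)) as P4.
  assert (E1 : e1 <= 1) by apply Rmin_l. assert (E2 : e1 <= e / K) by apply Rmin_r.
  assert (E3 : e1 * K <= e).
  { apply (Rmult_le_compat_r K) in E2; [|lra]. unfold Rdiv in E2.
     rewrite Rmult_assoc, Rinv_l, Rmult_1_r in E2; lra. }
  assert (Q1 : Cmod (Cminus (g s) (g t)) * Cmod (Cplus (Cminus (h s) (h t)) (h t)) <= e1 * (1 + Cmod (h t))).
  { apply Rmult_le_compat; auto. apply Cmod_ge_0. lra. lra. }
  assert (Q2 : Cmod (g t) * Cmod (Cminus (h s) (h t)) <= Cmod (g t) * e1) by (apply Rmult_le_compat_l; lra).
  unfold K in E3. nra.
Qed.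

Lemma ccont_comp (g : R -> C) (phi : R -> R) t :
  continuity_pt phi t -> ccont g (phi t) -> ccont (fun s => g (phi s)) t.
Proof.
  intros Hp Hg e He. destruct (Hg e He) as [d [Hd Hs]].
  destruct (eps_cont _ _ Hp d Hd) as [d' [Hd' Hs']]. exists d'; split; auto.
Qed.

Lemma ccont_RtoC (h : R -> R) t : continuity_pt h t -> ccont (fun s => RtoC (h s)) t.
Proof. intros H. apply ccont_comp_pt; simpl; auto. apply continuity_pt_const. intros x y; auto. Qed.

Definition locLip (f : C -> C) : Prop :=
  forall B, exists L, 0 <= L /\ forall u v, Cmod u <= B -> Cmod v <= B ->
    Cmod (Cminus (f u) (f v)) <= L * Cmod (Cminus u v).

Lemma locLip_comp f g t : locLip f -> ccont g t -> ccont (fun s => f (g s)) t.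
Proof.
  intros Hf Hg e He. destruct (Hf (Cmod (g t) + 1)) as [L [HL HLs]].
  destruct (Hg (Rmin 1 (e / (L + 1)))) as [d [Hd Hs]].
  { apply Rmin_pos; [lra|]. apply Rdiv_lt_0_compat; lra. }
  exists d; split; auto. intros s Hs'. specialize (Hs s Hs').
  assert (A : Cmod (g s) <= Cmod (g t) + 1).
  { pose proof (Cmod_tri3 (g s) (g t) (RtoC 0)). replace (Cminus (g s) (RtoC 0)) with (g s) in H by ring.
    replace (Cminus (g t) (RtoC 0)) with (g t) in H by ring. pose proof (Rmin_l 1 (e/(L+1))). lra. }
  eapply Rle_lt_trans. apply HLs; auto. pose proof (Cmod_ge_0 (g t)); lra.
  pose proof (Rmin_r 1 (e/(L+1))).
  assert (Cmod (Cminus (g s) (g t)) < e / (L+1)) by lra.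
  assert (L * Cmod (Cminus (g s) (g t)) <= (L+1) * Cmod (Cminus (g s) (g t))).
  { pose proof (Cmod_ge_0 (Cminus (g s) (g t))); nra. }
  assert ((L+1) * Cmod (Cminus (g s) (g t)) < e).
  { apply (Rmult_lt_compat_l (L+1)) in H0; [|lra]. unfold Rdiv in H0.
    rewrite <- Rmult_assoc, (Rmult_comm (L+1) e), Rmult_assoc, Rinv_r, Rmult_1_r in H0; lra. }
  lra.
Qed.

(* angle function for right half plane *)
Definition Pa (z : C) : R := atan (snd z / fst z).

Lemma Pa_spec z : 0 < fst z -> z = Cmult (RtoC (Cmod z)) (ex (Pa z)).
Proof.
  intros Hx. destruct z as [x y]. simpl in Hx. unfold Pa, ex. simpl.
  rewrite cos_atan, sin_atan.
  set (s := sqrt (1 + (y / x)²)).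
  assert (Hs : 0 < s) by (unfold s; apply sqrt_lt_R0; pose proof (Rle_0_sqr (y/x)); lra).
  assert (Hs2 : s * s = 1 + (y/x)²) by (unfold s; apply sqrt_sqrt; pose proof (Rle_0_sqr (y/x)); lra).
  assert (Hm : Cmod (x, y) = x * s).
  { unfold Cmod; simpl. rewrite <- (sqrt_square (x * s)) by nra. f_equal.
    replace (x * s * (x * s)) with (x * x * (s * s)) by ring. rewrite Hs2. unfold Rsqr. field. lra. }
  rewrite Hm. apply Ceq; simpl; field; lra.
Qed.

Lemma ex_PI t : ex (t + PI) = Copp (ex t).
Proof. unfold ex. apply Ceq; simpl. rewrite neg_cos; auto. rewrite neg_sin; auto. Qed.

Lemma polar z : z <> RtoC 0 -> exists t, z = Cmult (RtoC (Cmod z)) (ex t).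
Proof.
  intros Hz. destruct (Rlt_le_dec 0 (fst z)) as [H|H].
  - exists (Pa z). apply Pa_spec; auto.
  - destruct (Rlt_le_dec (fst z) 0) as [H'|H'].
    + exists (Pa (Copp z) + PI). rewrite ex_PI.
      assert (0 < fst (Copp z)) by (simpl; lra).
      pose proof (Pa_spec _ H0). rewrite Cmod_opp in H1.
      replace z with (Copp (Copp z)) at 1 by ring. rewrite H1 at 1. ring.
    + assert (fst z = 0) by lra. destruct z as [x y]; simpl in *. subst x.
      assert (y <> 0) by (intro; subst; apply Hz; auto).
      assert (Cmod (0, y) = Rabs y).
      { unfold Cmod; simpl. replace (0 * (0 * 1) + y * (y * 1)) with (y * y) by ring. apply sqrt_Rsqr_abs. }
      rewrite H1. destruct (Rlt_le_dec 0 y).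
      * exists (PI/2). unfold ex. rewrite cos_PI2, sin_PI2, Rabs_right by lra. apply Ceq; simpl; ring.
      * exists (-(PI/2)). unfold ex. rewrite cos_neg, sin_neg, cos_PI2, sin_PI2, Rabs_left by lra.
        apply Ceq; simpl; ring.
Qed.

Definition lifts (g : R -> C) (a b : R) (th : R -> R) : Prop :=
  (forall t, continuity_pt th t) /\
  (forall t, a <= t <= b -> g t = Cmult (RtoC (Cmod (g t))) (ex (th t))).

Definition nz (g : R -> C) (a b : R) : Prop := forall t, a <= t <= b -> g t <> RtoC 0.

Definition IsAng (g : R -> C) (a b x : R) : Prop :=
  a <= b /\ nz g a b /\ exists th, lifts g a b th /\ th b - th a = x.

Lemma IZR_half k m : IZR k = IZR m + /2 -> False.
Proof. intros H. assert (IZR (2 * k) = IZR (2 * m + 1)) by (rewrite plus_IZR, mult_IZR, mult_IZR; lra).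
  apply eq_IZR in H0. lia. Qed.

Lemma int_const (h : R -> R) a b : a <= b -> (forall t, continuity_pt h t) ->
  (forall t, a <= t <= b -> exists k : Z, h t = IZR k) -> h a = h b.
Proof.
  intros Hab Hc Hi.
  assert (Hcont : continuity h) by (intro; auto).
  destruct (Hi a ltac:(lra)) as [ka Ha]. destruct (Hi b ltac:(lra)) as [kb Hb].
  destruct (Z.lt_trichotomy ka kb) as [Hlt|[Heq|Hgt]].
  - exfalso. assert (a < b) by (destruct (Req_dec a b); [subst; rewrite Ha in Hb; apply eq_IZR in Hb; lia|lra]).
    destruct (IVT (fun t => h t - (IZR ka + /2)) a b) as [z [Hz1 Hz2]]; auto.
    + intro t. apply continuity_pt_minus; auto. apply continuity_pt_const. intros u v; auto.
    + rewrite Ha; lra.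
    + rewrite Hb. assert (IZR kb >= IZR ka + 1).
      { rewrite <- plus_IZR. apply Rle_ge, IZR_le. lia. } lra.
    + destruct (Hi z Hz1) as [kz Hkz]. apply (IZR_half kz ka). lra.
  - subst; congruence.
  - exfalso. assert (a < b) by (destruct (Req_dec a b); [subst; rewrite Ha in Hb; apply eq_IZR in Hb; lia|lra]).
    destruct (IVT (fun t => (IZR kb + /2) - h t) a b) as [z [Hz1 Hz2]]; auto.
    + intro t. apply continuity_pt_minus; auto. apply continuity_pt_const. intros u v; auto.
    + rewrite Ha. assert (IZR ka >= IZR kb + 1).
      { rewrite <- plus_IZR. apply Rle_ge, IZR_le. lia. } lra.
    + rewrite Hb; lra.
    + destruct (Hi z Hz1) as [kz Hkz]. apply (IZR_half kz kb). lra.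
Qed.

Lemma ex_cancel (r : R) t1 t2 : r <> 0 ->
  Cmult (RtoC r) (ex t1) = Cmult (RtoC r) (ex t2) -> ex t1 = ex t2.
Proof. intros Hr H. unfold ex, RtoC, Cmult in H; simpl in H. inversion H.
  unfold ex. apply Ceq; simpl; apply (Rmult_eq_reg_l r); auto; lra. Qed.

Lemma lifts_uniq g a b th1 th2 : a <= b -> nz g a b -> lifts g a b th1 -> lifts g a b th2 ->
  th1 b - th1 a = th2 b - th2 a.
Proof.
  intros Hab Hnz [Hc1 H1] [Hc2 H2].
  assert (PI2 : 0 < 2 * PI) by (pose proof PI_RGT_0; lra).
  set (h := fun t => (th1 t - th2 t) / (2 * PI)).
  assert (h a = h b).
  { apply int_const; auto.
    - intro t. unfold h. apply continuity_pt_div. apply continuity_pt_minus; auto.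
      apply continuity_pt_const; intros u v; auto. lra.
    - intros t Ht. assert (ex (th1 t) = ex (th2 t)).
      { apply (ex_cancel (Cmod (g t))). intro Hm. apply (Hnz t Ht). apply Cmod_eq_0; auto.
        rewrite <- H1, <- H2; auto. }
      destruct (ex_eq_int _ _ H) as [k Hk]. exists k. unfold h. rewrite Hk. field. lra. }
  unfold h in H. apply (Rmult_eq_compat_r (2 * PI)) in H.
  unfold Rdiv in H. rewrite !Rmult_assoc, !Rinv_l in H by lra. lra.
Qed.

Lemma IsAng_uniq g a b x y : IsAng g a b x -> IsAng g a b y -> x = y.
Proof. intros [Hab [Hnz [th1 [L1 E1]]]] [_ [_ [th2 [L2 E2]]]]. subst.
  apply lifts_uniq with g; auto. Qed.

Lemma nat_big x : exists n : nat, x < INR n.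
Proof.
  destruct (archimed x) as [H1 H2]. destruct (Z_le_gt_dec 0 (up x)) as [Hz|Hz].
  - exists (Z.to_nat (up x)). rewrite INR_IZR_INZ, Z2Nat.id; auto; lra.
  - exists 0%nat. simpl. apply Z.gt_lt in Hz. apply IZR_lt in Hz. lra.
Qed.

Lemma re_pos (z w : C) : Cmod (Cminus z w) < Cmod w -> 0 < fst (Cmult z (Cconj w)).
Proof. intros H. apply Cmod_lt_sq in H. destruct z as [x1 y1], w as [x2 y2]; simpl in *. nra. Qed.

Lemma Cmod_Cconj_mult u : Cmult (Cconj u) u = RtoC (Cmod u * Cmod u).
Proof. rewrite Cmod_sq. destruct u as [x y]; apply Ceq; simpl; ring. Qed.

Lemma step_lift (u v : C) phi : u <> RtoC 0 -> u = Cmult (RtoC (Cmod u)) (ex phi) ->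
  0 < fst (Cmult v (Cconj u)) -> v = Cmult (RtoC (Cmod v)) (ex (phi + Pa (Cmult v (Cconj u)))).
Proof.
  intros Hu Hphi Hre. set (w := Cmult v (Cconj u)).
  pose proof (Pa_spec w Hre) as Hw.
  assert (Hmw : Cmod w = Cmod v * Cmod u) by (unfold w; rewrite Cmod_mult, Cmod_conj; auto).
  assert (Hmu : 0 < Cmod u) by (apply Cmod_gt_0; auto).
  assert (E : Cmult v (RtoC (Cmod u * Cmod u)) = Cmult w u)
    by (rewrite <- Cmod_Cconj_mult; unfold w; ring).
  assert (HX : RtoC (Cmod u * Cmod u) <> RtoC 0).
  { intro H. inversion H. nra. }
  replace v with (Cmult (Cmult v (RtoC (Cmod u * Cmod u))) (Cinv (RtoC (Cmod u * Cmod u)))) at 1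
    by (field; auto).
  rewrite E. rewrite Hw at 1. rewrite Hphi at 1. rewrite Hmw, ex_add.
  apply Ceq; simpl; field; nra.
Qed.

Fixpoint sumk (n : nat) (F : nat -> R) : R :=
  match n with O => 0 | S k => sumk k F + F k end.

Lemma sumk_cont n (F : nat -> R -> R) t : (forall k, (k < n)%nat -> continuity_pt (F k) t) ->
  continuity_pt (fun s => sumk n (fun k => F k s)) t.
Proof.
  induction n; intros H; simpl.
  - apply continuity_pt_const. intros u v; auto.
  - apply (continuity_pt_plus (fun s => sumk n (fun k => F k s)) (F n)).
    apply IHn; intros; apply H; lia. apply H; lia.
Qed.

Definition clamp (a b t : R) := Rmin (Rmax t a) b.

Lemma clamp_lip a b s t : Rabs (clamp a b s - clamp a b t) <= Rabs (s - t).
Proof. unfold clamp, Rmin, Rmax. repeat destruct Rle_dec;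
  repeat match goal with |- context [Rabs ?x] => destruct (Rcase_abs x);
    [rewrite (Rabs_left x) by assumption | rewrite (Rabs_right x) by assumption] end; lra. Qed.

Lemma clamp_cont a b t : continuity_pt (clamp a b) t.
Proof. apply cont_eps. intros e He. exists e; split; auto. intros s Hs.
  eapply Rle_lt_trans; [apply clamp_lip|auto]. Qed.

Lemma clamp_in a b t : a <= b -> a <= clamp a b t <= b.
Proof. intros. unfold clamp, Rmin, Rmax. repeat destruct Rle_dec; lra. Qed.

Lemma clamp_id a b t : a <= t <= b -> clamp a b t = t.
Proof. intros. unfold clamp, Rmin, Rmax. repeat destruct Rle_dec; lra. Qed.

Lemma clamp_diff a b1 b2 t : a <= b1 <= b2 -> Rabs (clamp a b2 t - clamp a b1 t) <= b2 - b1.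
Proof. intros. unfold clamp, Rmin, Rmax. repeat destruct Rle_dec; apply Rabs_le; split; lra. Qed.

Lemma Pa_cont (w : R -> C) t : ccont w t -> 0 < fst (w t) ->
  continuity_pt (fun s => Pa (w s)) t.
Proof.
  intros Hw Hf. unfold Pa.
  apply (continuity_pt_comp (fun s => snd (w s) / fst (w s)) atan).
  - apply (continuity_pt_div (fun s => snd (w s)) (fun s => fst (w s))).
    apply ccont_snd; auto. apply ccont_fst; auto. lra.
  - apply derivable_continuous_pt, derivable_pt_atan.
Qed.

Lemma lift_exists g a b : a <= b -> (forall t, ccont g t) -> nz g a b ->
  exists th, lifts g a b th.
Proof.
  intros Hab Hg Hnz.
  destruct (continuity_ab_min (fun t => Cmod (g t)) a b Hab) as [mx [Hmx Hmxab]].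
  { intros c _. apply ccont_Cmod; auto. }
  set (m := Cmod (g mx)).
  assert (Hm : 0 < m) by (apply Cmod_gt_0; apply Hnz; auto).
  assert (UC : exists d, 0 < d /\ forall s t, a <= s <= b -> a <= t <= b -> Rabs (s - t) < d ->
             Cmod (Cminus (g s) (g t)) < m).
  { pose proof (Heine (fun t => fst (g t)) (fun c => a <= c <= b) (compact_P3 a b)) as H1.
    pose proof (Heine (fun t => snd (g t)) (fun c => a <= c <= b) (compact_P3 a b)) as H2.
    destruct (H1 (fun x _ => ccont_fst g x (Hg x)) (mkposreal (m/2) ltac:(lra))) as [d1 Hd1].
    destruct (H2 (fun x _ => ccont_snd g x (Hg x)) (mkposreal (m/2) ltac:(lra))) as [d2 Hd2].
    exists (Rmin d1 d2). split. apply Rmin_pos; apply cond_pos.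
    intros s t Hs Ht Hst. eapply Rle_lt_trans. apply Cmod_le_sum.
    simpl in Hd1, Hd2.
    pose proof (Hd1 s t Hs Ht ltac:(eapply Rlt_le_trans; [apply Hst|apply Rmin_l])).
    pose proof (Hd2 s t Hs Ht ltac:(eapply Rlt_le_trans; [apply Hst|apply Rmin_r])).
    simpl. replace (fst (g s) + - fst (g t)) with (fst (g s) - fst (g t)) by ring.
    replace (snd (g s) + - snd (g t)) with (snd (g s) - snd (g t)) by ring. lra. }
  destruct UC as [d [Hd UC]].
  destruct (nat_big ((b - a) / d)) as [n0 Hn0].
  set (n := S n0).
  assert (Hn : 0 < INR n) by (unfold n; rewrite S_INR; pose proof (pos_INR n0); lra).
  set (h := (b - a) / INR n).
  assert (Hh : 0 <= h) by (unfold h; apply Rdiv_le_0_compat; lra).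
  assert (Hhd : h < d).
  { unfold h. apply Rmult_lt_reg_r with (INR n); auto. unfold Rdiv. rewrite Rmult_assoc, Rinv_l by lra.
    assert (INR n0 < INR n) by (unfold n; rewrite S_INR; lra).
    assert ((b - a) / d * d = b - a) by (field; lra).
    assert ((b-a)/d * d < INR n * d) by (apply Rmult_lt_compat_r; lra). nra. }
  set (tk := fun k : nat => a + INR k * h).
  assert (Htk : forall k, (k <= n)%nat -> a <= tk k <= b).
  { intros k Hk. unfold tk. apply le_INR in Hk. pose proof (pos_INR k). split. nra.
    assert (INR k * h <= INR n * h) by nra. unfold h in H0 |- *.
    replace (INR n * ((b - a) / INR n)) with (b - a) in H0 by (field; lra). lra. }
  set (cl := fun (k : nat) t => clamp a (tk k) t).
  assert (Hcl : forall k t, (k <= n)%nat -> a <= cl k t <= b).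
  { intros k t Hk. unfold cl. pose proof (Htk k Hk). pose proof (clamp_in a (tk k) t ltac:(lra)). lra. }
  assert (Hcld : forall k t, (k < n)%nat -> Rabs (cl (S k) t - cl k t) < d).
  { intros k t Hk. unfold cl. eapply Rle_lt_trans. apply clamp_diff.
    pose proof (Htk k ltac:(lia)). split; [lra|]. unfold tk. rewrite S_INR. nra.
    unfold tk. rewrite S_INR. lra. }
  set (w := fun k t => Cmult (g (cl (S k) t)) (Cconj (g (cl k t)))).
  assert (Hw : forall k t, (k < n)%nat -> 0 < fst (w k t)).
  { intros k t Hk. unfold w. apply re_pos.
    eapply Rlt_le_trans. apply UC. apply Hcl; lia. apply Hcl; lia. apply Hcld; auto.
    unfold m. apply Hmx. apply Hcl; lia. }
  destruct (polar (g a) (Hnz a ltac:(lra))) as [th0 Hth0].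
  exists (fun t => th0 + sumk n (fun k => Pa (w k t))).
  split.
  - intro t. apply continuity_pt_plus. apply continuity_pt_const; intros u v; auto.
    apply (sumk_cont n (fun k s => Pa (w k s))). intros k Hk. apply Pa_cont; auto.
    unfold w. apply ccont_mult. apply ccont_comp. apply clamp_cont. apply Hg.
    apply ccont_conj. apply ccont_comp. apply clamp_cont. apply Hg.
  - intros t Ht.
    assert (Hind : forall j, (j <= n)%nat ->
      g (cl j t) = Cmult (RtoC (Cmod (g (cl j t)))) (ex (th0 + sumk j (fun k => Pa (w k t))))).
    { induction j; intros Hj.
      - simpl. unfold cl, tk. simpl. replace (a + 0 * h) with a by ring.
        replace (clamp a a t) with a by (unfold clamp, Rmin, Rmax; repeat destruct Rle_dec; lra).
        rewrite Rplus_0_r; auto.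
      - simpl. rewrite <- Rplus_assoc. apply step_lift.
        + apply Hnz. apply Hcl. lia.
        + apply IHj. lia.
        + apply Hw. lia. }
    pose proof (Hind n (le_n n)) as E.
    assert (cl n t = t).
    { unfold cl, tk. unfold h. replace (a + INR n * ((b - a) / INR n)) with b by (field; lra).
      apply clamp_id; auto. }
    rewrite H in E. auto.
Qed.

Lemma IsAng_exists g a b : a <= b -> (forall t, ccont g t) -> nz g a b -> exists x, IsAng g a b x.
Proof. intros Hab Hg Hnz. destruct (lift_exists g a b Hab Hg Hnz) as [th Hth].
  exists (th b - th a). repeat split; auto. exists th; auto. Qed.

Definition cont (g : R -> C) := forall t, ccont g t.

Definition Ang (g : R -> C) (a b : R) : R := epsilon (inhabits 0) (IsAng g a b).

Lemma Ang_eq g a b x : IsAng g a b x -> Ang g a b = x.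
Proof. intros H. unfold Ang. apply (IsAng_uniq g a b). apply epsilon_spec. exists x; auto. auto. Qed.

Lemma Ang_spec g a b : a <= b -> cont g -> nz g a b -> IsAng g a b (Ang g a b).
Proof. intros. destruct (IsAng_exists g a b) as [x Hx]; auto. rewrite (Ang_eq _ _ _ _ Hx); auto. Qed.

Lemma lifts_restrict g a b a' b' th : a <= a' -> b' <= b -> lifts g a b th -> lifts g a' b' th.
Proof. intros H1 H2 [Hc Hl]. split; auto. intros t Ht. apply Hl. lra. Qed.

Lemma Ang_add g a b c : a <= b -> b <= c -> cont g -> nz g a c ->
  Ang g a c = Ang g a b + Ang g b c.
Proof.
  intros Hab Hbc Hg Hnz. destruct (lift_exists g a c ltac:(lra) Hg Hnz) as [th Hth].
  rewrite (Ang_eq g a c (th c - th a)).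
  rewrite (Ang_eq g a b (th b - th a)).
  rewrite (Ang_eq g b c (th c - th b)). ring.
  all: repeat split; try lra; try (intros t Ht; apply Hnz; lra).
  all: exists th; split; auto; eapply lifts_restrict; eauto; lra.
Qed.

Lemma IsAng_mult g1 g2 a b x y : IsAng g1 a b x -> IsAng g2 a b y ->
  IsAng (fun t => Cmult (g1 t) (g2 t)) a b (x + y).
Proof.
  intros [Hab [Hn1 [th1 [[Hc1 Hl1] E1]]]] [_ [Hn2 [th2 [[Hc2 Hl2] E2]]]].
  split; auto. split.
  - intros t Ht H. assert (Cmod (g1 t) * Cmod (g2 t) = 0) by (rewrite <- Cmod_mult, H, Cmod_0; auto).
    apply Rmult_integral in H0. destruct H0; [apply (Hn1 t)|apply (Hn2 t)]; auto; apply Cmod_eq_0; auto.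
  - exists (fun t => th1 t + th2 t). split; [split|].
    + intro t. apply continuity_pt_plus; auto.
    + intros t Ht. rewrite Cmod_mult, ex_add. rewrite (Hl1 t Ht) at 1. rewrite (Hl2 t Ht) at 1.
      apply Ceq; simpl; ring.
    + lra.
Qed.

Lemma IsAng_conj g a b x : IsAng g a b x -> IsAng (fun t => Cconj (g t)) a b (- x).
Proof.
  intros [Hab [Hn [th [[Hc Hl] E]]]]. split; auto. split.
  - intros t Ht H. apply (Hn t Ht). rewrite <- (Cconj_conj (g t)), H. apply Ceq; simpl; ring.
  - exists (fun t => - th t). split; [split|].
    + intro t. apply continuity_pt_opp; auto.
    + intros t Ht. rewrite Cmod_conj. rewrite (Hl t Ht) at 1. unfold ex.
      rewrite cos_neg, sin_neg. apply Ceq; simpl; ring.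
    + lra.
Qed.

Lemma IsAng_const (z : C) a b : a <= b -> z <> RtoC 0 -> IsAng (fun _ => z) a b 0.
Proof.
  intros Hab Hz. destruct (polar z Hz) as [t0 Ht0]. split; auto. split.
  - intros t _; auto.
  - exists (fun _ => t0). split; [split|].
    + intro; apply continuity_pt_const; intros u v; auto.
    + intros; auto.
    + ring.
Qed.

Lemma IsAng_pos g a b : a <= b -> cont g -> (forall t, a <= t <= b -> 0 < fst (g t)) ->
  IsAng g a b (Pa (g b) - Pa (g a)).
Proof.
  intros Hab Hg Hp. split; auto. split.
  - intros t Ht H. specialize (Hp t Ht). rewrite H in Hp. simpl in Hp; lra.
  - exists (fun t => Pa (g (clamp a b t))). split; [split|].
    + intro t. apply Pa_cont. apply ccont_comp. apply clamp_cont. apply Hg.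
      apply Hp. apply clamp_in; auto.
    + intros t Ht. rewrite clamp_id; auto. apply Pa_spec; auto.
    + rewrite !clamp_id; lra.
Qed.

Lemma IsAng_rouche g1 g2 a b x : IsAng g1 a b x -> cont g1 -> cont g2 ->
  (forall t, a <= t <= b -> Cmod (Cminus (g2 t) (g1 t)) < Cmod (g1 t)) ->
  IsAng g2 a b (x + Pa (Cmult (g2 b) (Cconj (g1 b))) - Pa (Cmult (g2 a) (Cconj (g1 a)))).
Proof.
  intros [Hab [Hn [th [[Hc Hl] E]]]] H1 H2 Hr.
  set (w := fun t => Cmult (g2 t) (Cconj (g1 t))).
  assert (Hw : forall t, a <= t <= b -> 0 < fst (w t)) by (intros; apply re_pos; auto).
  assert (Hwc : cont w) by (intro t; apply ccont_mult; auto; apply ccont_conj; auto).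
  split; auto. split.
  - intros t Ht H. specialize (Hr t Ht). rewrite H in Hr.
    replace (Cminus (RtoC 0) (g1 t)) with (Copp (g1 t)) in Hr by ring. rewrite Cmod_opp in Hr. lra.
  - exists (fun t => th t + Pa (w (clamp a b t))). split; [split|].
    + intro t. apply continuity_pt_plus; auto. apply Pa_cont. apply ccont_comp. apply clamp_cont. apply Hwc.
      apply Hw. apply clamp_in; auto.
    + intros t Ht. rewrite clamp_id; auto. apply step_lift; auto. apply Hw; auto.
    + rewrite !clamp_id by lra. unfold w. lra.
Qed.

Lemma IsAng_reparam g A B x (phi : R -> R) a b : IsAng g A B x -> (forall t, continuity_pt phi t) ->
  a <= b -> phi a = A -> phi b = B -> (forall t, a <= t <= b -> A <= phi t <= B) ->
  IsAng (fun t => g (phi t)) a b x.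
Proof.
  intros [HAB [Hn [th [[Hc Hl] E]]]] Hp Hab Ha Hb Hin. split; auto. split.
  - intros t Ht. apply Hn; auto.
  - exists (fun t => th (phi t)). split; [split|].
    + intro t. apply (continuity_pt_comp phi th); auto.
    + intros t Ht. apply Hl; auto.
    + rewrite Ha, Hb; auto.
Qed.

Lemma IsAng_reparam_rev g A B x (phi : R -> R) a b : IsAng g A B x -> (forall t, continuity_pt phi t) ->
  a <= b -> phi a = B -> phi b = A -> (forall t, a <= t <= b -> A <= phi t <= B) ->
  IsAng (fun t => g (phi t)) a b (- x).
Proof.
  intros [HAB [Hn [th [[Hc Hl] E]]]] Hp Hab Ha Hb Hin. split; auto. split.
  - intros t Ht. apply Hn; auto.
  - exists (fun t => th (phi t)). split; [split|].
    + intro t. apply (continuity_pt_comp phi th); auto.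
    + intros t Ht. apply Hl; auto.
    + rewrite Ha, Hb; lra.
Qed.

Lemma IsAng_ext g1 g2 a b x : IsAng g1 a b x -> (forall t, a <= t <= b -> g1 t = g2 t) -> IsAng g2 a b x.
Proof.
  intros [Hab [Hn [th [[Hc Hl] E]]]] He. split; auto. split.
  - intros t Ht. rewrite <- He; auto.
  - exists th. split; [split|]; auto. intros t Ht. rewrite <- He; auto.
Qed.

Lemma IsAng_closed g x : IsAng g 0 1 x -> g 0 = g 1 -> exists k : Z, x = 2 * PI * IZR k.
Proof.
  intros [Hab [Hn [th [[Hc Hl] E]]]] He.
  assert (ex (th 1) = ex (th 0)).
  { pose proof (Hl 1 ltac:(lra)) as A. pose proof (Hl 0 ltac:(lra)) as B. rewrite He in B.
    apply (ex_cancel (Cmod (g 1))). intro H. apply (Hn 1 ltac:(lra)). apply Cmod_eq_0; auto.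
    rewrite <- A. auto. }
  destruct (ex_eq_int _ _ H) as [k Hk]. exists k. lra.
Qed.

Lemma IsAng_rouche_loop g1 g2 x : IsAng g1 0 1 x -> cont g1 -> cont g2 ->
  g1 0 = g1 1 -> g2 0 = g2 1 ->
  (forall t, 0 <= t <= 1 -> Cmod (Cminus (g2 t) (g1 t)) < Cmod (g1 t)) ->
  IsAng g2 0 1 x.
Proof.
  intros H Hc1 Hc2 E1 E2 Hr. pose proof (IsAng_rouche g1 g2 0 1 x H Hc1 Hc2 Hr).
  rewrite E1, E2 in H0. replace (x + Pa (Cmult (g2 1) (Cconj (g1 1))) - Pa (Cmult (g2 1) (Cconj (g1 1)))) with x in H0 by ring.
  auto.
Qed.

Lemma min2d (F : R -> R -> C) a b c d L :
  a <= b -> c <= d -> 0 <= L -> (forall s, cont (F s)) ->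
  (forall s s' t, a <= s <= b -> a <= s' <= b -> c <= t <= d ->
     Cmod (Cminus (F s t) (F s' t)) <= L * Rabs (s - s')) ->
  (forall s t, a <= s <= b -> c <= t <= d -> F s t <> RtoC 0) ->
  exists m, 0 < m /\ forall s t, a <= s <= b -> c <= t <= d -> m <= Cmod (F s t).
Proof.
  intros Hab Hcd HL Hc HLip Hnz.
  set (P := fun s t => c <= t <= d /\ forall t', c <= t' <= d -> Cmod (F s t) <= Cmod (F s t')).
  assert (HP : forall s, exists t, P s t).
  { intro s. destruct (continuity_ab_min (fun t => Cmod (F s t)) c d Hcd) as [mx [H1 H2]].
    intros t _. apply ccont_Cmod. apply Hc. exists mx; split; auto. }
  set (tm := fun s => epsilon (inhabits c) (P s)).
  assert (Htm : forall s, P s (tm s)) by (intro s; apply epsilon_spec; auto).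
  set (G := fun s => Cmod (F (clamp a b s) (tm (clamp a b s)))).
  assert (Gle : forall s1 s2, G s1 <= G s2 + L * Rabs (s1 - s2)).
  { intros s1 s2. unfold G.
    set (x1 := clamp a b s1). set (x2 := clamp a b s2).
    destruct (Htm x1) as [T1 M1]. destruct (Htm x2) as [T2 M2].
    pose proof (M1 (tm x2) T2).
    pose proof (HLip x1 x2 (tm x2) (clamp_in a b s1 Hab) (clamp_in a b s2 Hab) T2).
    pose proof (Cmod_tri3 (F x1 (tm x2)) (F x2 (tm x2)) (RtoC 0)).
    replace (Cminus (F x1 (tm x2)) (RtoC 0)) with (F x1 (tm x2)) in H1 by ring.
    replace (Cminus (F x2 (tm x2)) (RtoC 0)) with (F x2 (tm x2)) in H1 by ring.
    pose proof (clamp_lip a b s1 s2). fold x1 x2 in H2.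
    assert (L * Rabs (x1 - x2) <= L * Rabs (s1 - s2)) by (apply Rmult_le_compat_l; auto).
    lra. }
  assert (Gc : forall s, continuity_pt G s).
  { intro s. apply cont_eps. intros e He. exists (e / (L + 1)). split. apply Rdiv_lt_0_compat; lra.
    intros s' Hs'. pose proof (Gle s' s). pose proof (Gle s s').
    rewrite Rabs_minus_sym in H0.
    assert (L * Rabs (s' - s) < e).
    { apply Rle_lt_trans with ((L + 1) * Rabs (s' - s)). pose proof (Rabs_pos (s' - s)); nra.
      apply (Rmult_lt_compat_l (L + 1)) in Hs'; [|lra]. unfold Rdiv in Hs'.
      rewrite <- Rmult_assoc, (Rmult_comm (L+1) e), Rmult_assoc, Rinv_r, Rmult_1_r in Hs'; lra. }
    apply Rabs_def1; lra. }
  destruct (continuity_ab_min G a b Hab) as [smin [H1 H2]]. { intros; auto. }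
  exists (G smin). split.
  - unfold G. apply Cmod_gt_0. apply Hnz. apply clamp_in; auto. apply Htm.
  - intros s t Hs Ht. eapply Rle_trans. apply H1; eauto. unfold G. rewrite clamp_id by auto.
    apply Htm; auto.
Qed.

Lemma homotopy (F : R -> R -> C) L x : 0 <= L -> (forall s, cont (F s)) ->
  (forall s, 0 <= s <= 1 -> F s 0 = F s 1) ->
  (forall s s' t, 0 <= s <= 1 -> 0 <= s' <= 1 -> 0 <= t <= 1 ->
     Cmod (Cminus (F s t) (F s' t)) <= L * Rabs (s - s')) ->
  (forall s t, 0 <= s <= 1 -> 0 <= t <= 1 -> F s t <> RtoC 0) ->
  IsAng (F 0) 0 1 x -> IsAng (F 1) 0 1 x.
Proof.
  intros HL Hc Hcl HLip Hnz H0.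
  destruct (min2d F 0 1 0 1 L) as [m [Hm Hmin]]; try lra; auto.
  destruct (nat_big (L / m)) as [n0 Hn0]. set (n := S n0).
  assert (Hn : 0 < INR n) by (unfold n; rewrite S_INR; pose proof (pos_INR n0); lra).
  assert (HLn : L / INR n < m).
  { assert (INR n0 < INR n) by (unfold n; rewrite S_INR; lra).
    apply Rmult_lt_reg_r with (INR n); auto. unfold Rdiv. rewrite Rmult_assoc, Rinv_l by lra.
    assert (L / m * m = L) by (field; lra).
    assert (L/m * m < INR n * m) by (apply Rmult_lt_compat_r; lra). nra. }
  assert (Hj : forall j, (j <= n)%nat -> IsAng (F (INR j / INR n)) 0 1 x).
  { intro j; induction j as [|j IHj]; intros Hjn.
    - rewrite INR_0. replace (0 / INR n) with 0 by (field; lra). auto.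
    - assert (Hs1 : 0 <= INR j / INR n <= 1).
      { apply le_INR in Hjn. rewrite S_INR in Hjn. pose proof (pos_INR j). split.
        apply Rdiv_le_0_compat; lra. apply Rmult_le_reg_r with (INR n); auto. unfold Rdiv.
        rewrite Rmult_assoc, Rinv_l by lra. lra. }
      assert (Hs2 : 0 <= INR (S j) / INR n <= 1).
      { apply le_INR in Hjn. pose proof (pos_INR (S j)). split.
        apply Rdiv_le_0_compat; lra. apply Rmult_le_reg_r with (INR n); auto. unfold Rdiv.
        rewrite Rmult_assoc, Rinv_l by lra. lra. }
      apply IsAng_rouche_loop with (F (INR j / INR n)); auto.
      + apply IHj. lia.
      + intros t Ht. eapply Rle_lt_trans. apply HLip; auto.
        apply Rle_lt_trans with (L / INR n).
        * rewrite S_INR. replace ((INR j + 1) / INR n - INR j / INR n) with (/ INR n) by (field; lra).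
          rewrite Rabs_right. unfold Rdiv; lra. apply Rle_ge, Rlt_le, Rinv_0_lt_compat; auto.
        * eapply Rlt_le_trans. apply HLn. apply Hmin; auto. }
  pose proof (Hj n (le_n n)). replace (INR n / INR n) with 1 in H by (field; lra). auto.
Qed.

Definition seg (z w : C) (s : R) : C := Cplus z (Cmult (RtoC s) (Cminus w z)).
Definition SA (f : C -> C) (z w : C) : R := Ang (fun s => f (seg z w s)) 0 1.

Lemma ccont_id t : ccont (fun s => RtoC s) t.
Proof. apply ccont_RtoC. apply continuity_pt_id. Qed.

Lemma seg_cont z w : cont (seg z w).
Proof. intro t. unfold seg. apply ccont_plus. apply ccont_const. apply ccont_mult.
  apply ccont_id. apply ccont_const. Qed.

Lemma fseg_cont f z w : locLip f -> cont (fun s => f (seg z w s)).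
Proof. intros Hf t. apply locLip_comp; auto. apply seg_cont. Qed.

Lemma seg_0 z w : seg z w 0 = z.
Proof. unfold seg. apply Ceq; simpl; ring. Qed.
Lemma seg_1 z w : seg z w 1 = w.
Proof. unfold seg. apply Ceq; simpl; ring. Qed.

Definition segnz f z w := forall s, 0 <= s <= 1 -> f (seg z w s) <> RtoC 0.

Lemma SA_spec f z w : locLip f -> segnz f z w -> IsAng (fun s => f (seg z w s)) 0 1 (SA f z w).
Proof. intros. apply Ang_spec; auto. lra. apply fseg_cont; auto. Qed.

Lemma SA_split f z w lam : locLip f -> 0 <= lam <= 1 -> segnz f z w ->
  SA f z w = SA f z (seg z w lam) + SA f (seg z w lam) w.
Proof.
  intros Hf Hl Hnz. unfold SA at 1.
  rewrite (Ang_add _ 0 lam 1) by (try lra; try apply fseg_cont; auto).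
  f_equal.
  - symmetry. apply Ang_eq.
    assert (H : IsAng (fun s => f (seg z w s)) 0 lam (Ang (fun s => f (seg z w s)) 0 lam)).
    { apply Ang_spec. lra. apply fseg_cont; auto. intros t Ht; apply Hnz; lra. }
    pose proof (IsAng_reparam _ _ _ _ (fun s => lam * s) 0 1 H) as H2.
    eapply IsAng_ext. apply H2.
    + intro t. apply continuity_pt_mult. apply continuity_pt_const; intros u v; auto. apply continuity_pt_id.
    + lra.
    + ring.
    + ring.
    + intros; nra.
    + intros t _. simpl. f_equal. unfold seg. apply Ceq; simpl; ring.
  - symmetry. apply Ang_eq.
    assert (H : IsAng (fun s => f (seg z w s)) lam 1 (Ang (fun s => f (seg z w s)) lam 1)).
    { apply Ang_spec. lra. apply fseg_cont; auto. intros t Ht; apply Hnz; lra. }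
    pose proof (IsAng_reparam _ _ _ _ (fun s => lam + (1 - lam) * s) 0 1 H) as H2.
    eapply IsAng_ext. apply H2.
    + intro t. apply continuity_pt_plus. apply continuity_pt_const; intros u v; auto.
      apply continuity_pt_mult. apply continuity_pt_const; intros u v; auto. apply continuity_pt_id.
    + lra.
    + ring.
    + ring.
    + intros; nra.
    + intros t _. simpl. f_equal. unfold seg. apply Ceq; simpl; ring.
Qed.

Lemma SA_rev f z w : locLip f -> segnz f z w -> SA f w z = - SA f z w.
Proof.
  intros Hf Hnz. apply Ang_eq.
  pose proof (IsAng_reparam_rev _ _ _ _ (fun s => 1 - s) 0 1 (SA_spec f z w Hf Hnz)) as H2.
  eapply IsAng_ext. apply H2.
  + intro t. apply continuity_pt_minus. apply continuity_pt_const; intros u v; auto. apply continuity_pt_id.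
  + lra.
  + ring.
  + ring.
  + intros; lra.
  + intros t _. simpl. f_equal. unfold seg. apply Ceq; simpl; ring.
Qed.

Lemma SA_near_const f z w (c : C) : locLip f -> f c <> RtoC 0 ->
  (forall s, 0 <= s <= 1 -> Cmod (Cminus (f (seg z w s)) (f c)) < Cmod (f c)) ->
  SA f z w = Pa (Cmult (f w) (Cconj (f c))) - Pa (Cmult (f z) (Cconj (f c))).
Proof.
  intros Hf Hc Hr. apply Ang_eq.
  pose proof (IsAng_rouche (fun _ => f c) (fun s => f (seg z w s)) 0 1 0
     (IsAng_const (f c) 0 1 ltac:(lra) Hc) (fun t => ccont_const _ t) (fseg_cont f z w Hf) Hr).
  cbv beta in H. rewrite seg_0, seg_1 in H. replace (0 + Pa (Cmult (f w) (Cconj (f c))) - Pa (Cmult (f z) (Cconj (f c))))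
   with (Pa (Cmult (f w) (Cconj (f c))) - Pa (Cmult (f z) (Cconj (f c)))) in H by ring. auto.
Qed.

Definition RW (f : C -> C) (x0 x1 y0 y1 : R) : R :=
  SA f (x0, y0) (x1, y0) + SA f (x1, y0) (x1, y1) + SA f (x1, y1) (x0, y1) + SA f (x0, y1) (x0, y0).

Definition bdnz (f : C -> C) (x0 x1 y0 y1 : R) : Prop :=
  forall x y, x0 <= x <= x1 -> y0 <= y <= y1 -> (x = x0 \/ x = x1 \/ y = y0 \/ y = y1) ->
    f (x, y) <> RtoC 0.

Lemma seg_h x0 x1 y s : seg (x0, y) (x1, y) s = (x0 + s * (x1 - x0), y).
Proof. unfold seg. apply Ceq; simpl; ring. Qed.
Lemma seg_v x y0 y1 s : seg (x, y0) (x, y1) s = (x, y0 + s * (y1 - y0)).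
Proof. unfold seg. apply Ceq; simpl; ring. Qed.

Lemma segnz_h f x0 x1 y0 y1 y : x0 <= x1 -> (y = y0 \/ y = y1) -> y0 <= y1 -> bdnz f x0 x1 y0 y1 ->
  segnz f (x0, y) (x1, y) /\ segnz f (x1, y) (x0, y).
Proof. intros Hx Hy Hy' H. split; intros s Hs; rewrite seg_h; apply H; try nra; intuition. Qed.

Lemma segnz_v f x0 x1 y0 y1 x : y0 <= y1 -> (x = x0 \/ x = x1) -> x0 <= x1 -> bdnz f x0 x1 y0 y1 ->
  segnz f (x, y0) (x, y1) /\ segnz f (x, y1) (x, y0).
Proof. intros Hx Hy Hy' H. split; intros s Hs; rewrite seg_v; apply H; try nra; intuition. Qed.

Lemma RW_splitx f x0 x1 x2 y0 y1 : locLip f -> x0 <= x1 <= x2 -> x0 < x2 -> y0 <= y1 ->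
  bdnz f x0 x1 y0 y1 -> bdnz f x1 x2 y0 y1 ->
  RW f x0 x2 y0 y1 = RW f x0 x1 y0 y1 + RW f x1 x2 y0 y1.
Proof.
  intros Hf Hx Hx' Hy B1 B2. unfold RW.
  set (lam := (x1 - x0) / (x2 - x0)).
  assert (Hl : 0 <= lam <= 1).
  { unfold lam; split. apply Rdiv_le_0_compat; lra. apply Rmult_le_reg_r with (x2 - x0). lra.
    unfold Rdiv; rewrite Rmult_assoc, Rinv_l; lra. }
  assert (B : bdnz f x0 x2 y0 y1).
  { intros x y Hxx Hyy Hb. destruct (Rle_dec x x1).
    - apply B1; [lra|lra|]; destruct Hb as [H|[H|[H|H]]];
        [left; lra | right; left; lra | right; right; left; lra | right; right; right; lra].
    - apply B2; [lra|lra|]; destruct Hb as [H|[H|[H|H]]];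
        [left; lra | right; left; lra | right; right; left; lra | right; right; right; lra]. }
  assert (E1 : seg (x0, y0) (x2, y0) lam = (x1, y0)) by (rewrite seg_h; unfold lam; f_equal; field; lra).
  assert (E2 : seg (x2, y1) (x0, y1) (1 - lam) = (x1, y1)) by (rewrite seg_h; unfold lam; f_equal; field; lra).
  rewrite (SA_split f (x0, y0) (x2, y0) lam), E1; auto.
  2: apply (segnz_h f x0 x2 y0 y1); auto; lra.
  rewrite (SA_split f (x2, y1) (x0, y1) (1 - lam)), E2; auto; try lra.
  2: apply (segnz_h f x0 x2 y0 y1); auto; lra.
  rewrite (SA_rev f (x1, y0) (x1, y1)); auto.
  2: apply (segnz_v f x1 x2 y0 y1); auto; lra.
  ring.
Qed.

Lemma RW_splity f x0 x1 y0 y1 y2 : locLip f -> y0 <= y1 <= y2 -> y0 < y2 -> x0 <= x1 ->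
  bdnz f x0 x1 y0 y1 -> bdnz f x0 x1 y1 y2 ->
  RW f x0 x1 y0 y2 = RW f x0 x1 y0 y1 + RW f x0 x1 y1 y2.
Proof.
  intros Hf Hy Hy' Hx B1 B2. unfold RW.
  set (lam := (y1 - y0) / (y2 - y0)).
  assert (Hl : 0 <= lam <= 1).
  { unfold lam; split. apply Rdiv_le_0_compat; lra. apply Rmult_le_reg_r with (y2 - y0). lra.
    unfold Rdiv; rewrite Rmult_assoc, Rinv_l; lra. }
  assert (B : bdnz f x0 x1 y0 y2).
  { intros x y Hxx Hyy Hb. destruct (Rle_dec y y1).
    - apply B1; [lra|lra|]; destruct Hb as [H|[H|[H|H]]];
        [left; lra | right; left; lra | right; right; left; lra | right; right; right; lra].
    - apply B2; [lra|lra|]; destruct Hb as [H|[H|[H|H]]];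
        [left; lra | right; left; lra | right; right; left; lra | right; right; right; lra]. }
  assert (E1 : seg (x1, y0) (x1, y2) lam = (x1, y1)) by (rewrite seg_v; unfold lam; f_equal; field; lra).
  assert (E2 : seg (x0, y2) (x0, y0) (1 - lam) = (x0, y1)) by (rewrite seg_v; unfold lam; f_equal; field; lra).
  rewrite (SA_split f (x1, y0) (x1, y2) lam), E1; auto.
  2: apply (segnz_v f x0 x1 y0 y2); auto; lra.
  rewrite (SA_split f (x0, y2) (x0, y0) (1 - lam)), E2; auto; try lra.
  2: apply (segnz_v f x0 x1 y0 y2); auto; lra.
  rewrite (SA_rev f (x0, y1) (x1, y1)); auto.
  2: apply (segnz_h f x0 x1 y1 y2); auto; lra.
  ring.
Qed.

Lemma Cmod_pt x y : Cmod (x, y) <= Rabs x + Rabs y.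
Proof. apply (Cmod_le_sum (x, y)). Qed.

Lemma Cmod_hdiff x x' y : Cmod (Cminus (x, y) (x', y)) = Rabs (x - x').
Proof. rewrite <- sqrt_Rsqr_abs. unfold Cmod. f_equal. unfold Rsqr. simpl. ring. Qed.

Lemma INR_le_pow2 n : INR n <= 2 ^ n.
Proof. induction n. simpl; lra. rewrite S_INR. simpl. pose proof (pow_le 2 n ltac:(lra)). 
  assert (1 <= 2 ^ n) by (apply pow_R1_Rle; lra). lra. Qed.

Lemma curve_v_cont x : cont (fun y => (x, y) : C).
Proof. intro t. apply ccont_comp_pt; simpl. apply continuity_pt_const; intros u v; auto. apply continuity_pt_id. Qed.

Lemma zf_bdnz f x0 x1 y0 y1 a0 a1 b0 b1 :
  (forall x y, x0 <= x <= x1 -> y0 <= y <= y1 -> f (x, y) <> RtoC 0) ->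
  x0 <= a0 -> a1 <= x1 -> y0 <= b0 -> b1 <= y1 -> bdnz f a0 a1 b0 b1.
Proof. intros H ? ? ? ? x y Hx Hy _. apply H; lra. Qed.

Lemma RW_zero_free f x0 x1 y0 y1 : locLip f -> x0 <= x1 -> y0 <= y1 ->
  (forall x y, x0 <= x <= x1 -> y0 <= y <= y1 -> f (x, y) <> RtoC 0) ->
  RW f x0 x1 y0 y1 = 0.
Proof.
  intros Hf Hx Hy Hnz.
  set (B := Rabs x0 + Rabs x1 + Rabs y0 + Rabs y1).
  assert (HB : forall x y, x0 <= x <= x1 -> y0 <= y <= y1 -> Cmod (x, y) <= B).
  { intros x y H1 H2. eapply Rle_trans. apply Cmod_pt. unfold B.
    assert (Rabs x <= Rabs x0 + Rabs x1) by (unfold Rabs; repeat destruct Rcase_abs; lra).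
    assert (Rabs y <= Rabs y0 + Rabs y1) by (unfold Rabs; repeat destruct Rcase_abs; lra).
    pose proof (Rabs_pos x0). pose proof (Rabs_pos x1). pose proof (Rabs_pos y0). pose proof (Rabs_pos y1). lra. }
  destruct (Hf B) as [L [HL HLip]].
  destruct (min2d (fun x y => f (x, y)) x0 x1 y0 y1 L) as [m [Hm Hmin]]; auto.
  { intros s t. apply locLip_comp; auto. apply curve_v_cont. }
  { intros s s' t Hs Hs' Ht. eapply Rle_trans. apply HLip; apply HB; auto. rewrite Cmod_hdiff. lra. }
  set (d := m / (2 * (L + 1))).
  assert (Hd : 0 < d) by (unfold d; apply Rdiv_lt_0_compat; lra).
  assert (HLd : 2 * L * d < m).
  { unfold d. apply Rlt_le_trans with (2 * (L + 1) * (m / (2 * (L + 1)))). 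
    apply Rmult_lt_compat_r. apply Rdiv_lt_0_compat; lra. lra. right; field; lra. }
  assert (Q0 : forall a0 a1 b0 b1, x0 <= a0 <= a1 -> a1 <= x1 -> y0 <= b0 <= b1 -> b1 <= y1 ->
            a1 - a0 <= d -> b1 - b0 <= d -> RW f a0 a1 b0 b1 = 0).
  { intros a0 a1 b0 b1 Ha Ha' Hb Hb' Hwa Hwb.
    set (c := (a0, b0) : C).
    assert (Hc : f c <> RtoC 0) by (apply Hnz; lra).
    assert (Hcl : forall x y, a0 <= x <= a1 -> b0 <= y <= b1 -> Cmod (Cminus (f (x, y)) (f c)) < Cmod (f c)).
    { intros x y Hxx Hyy. eapply Rle_lt_trans. apply HLip. apply HB; lra. apply HB; lra.
      eapply Rle_lt_trans. apply Rmult_le_compat_l; auto.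
      replace (Cminus (x, y) c) with ((x - a0, y - b0) : C) by (apply Ceq; simpl; ring). apply Cmod_pt.
      eapply Rlt_le_trans with m; [|apply Hmin; lra].
      rewrite !Rabs_right by lra. nra. }
    unfold RW. rewrite (SA_near_const f _ _ c), (SA_near_const f (a1, b0) _ c), (SA_near_const f (a1, b1) _ c),
      (SA_near_const f (a0, b1) _ c); auto; try ring.
    all: intros s Hs; first [rewrite seg_h | rewrite seg_v]; apply Hcl; nra. }
  assert (Qk : forall k a0 a1 b0 b1, x0 <= a0 <= a1 -> a1 <= x1 -> y0 <= b0 <= b1 -> b1 <= y1 ->
            a1 - a0 <= 2 ^ k * d -> b1 - b0 <= 2 ^ k * d -> RW f a0 a1 b0 b1 = 0).
  { induction k as [|k IH].
    - simpl. intros. apply Q0; lra.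
    - assert (Q' : forall a0 a1 b0 b1, x0 <= a0 <= a1 -> a1 <= x1 -> y0 <= b0 <= b1 -> b1 <= y1 ->
            a1 - a0 <= 2 ^ S k * d -> b1 - b0 <= 2 ^ k * d -> RW f a0 a1 b0 b1 = 0).
      { intros a0 a1 b0 b1 Ha Ha' Hb Hb' Hwa Hwb. simpl in Hwa.
        destruct (Req_dec a0 a1) as [E|E].
        - assert (0 <= 2^k*d) by (apply Rmult_le_pos; [apply pow_le; lra| lra]).
          apply IH; auto; lra.
        - rewrite (RW_splitx f a0 ((a0 + a1) / 2) a1); auto; try lra.
          rewrite (IH a0 ((a0+a1)/2)), (IH ((a0+a1)/2) a1); auto; try lra.
          all: try (apply (zf_bdnz f x0 x1 y0 y1); auto; lra). }
      intros a0 a1 b0 b1 Ha Ha' Hb Hb' Hwa Hwb. simpl in Hwb.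
      destruct (Req_dec b0 b1) as [E|E].
      + assert (0 <= 2^k*d) by (apply Rmult_le_pos; [apply pow_le; lra| lra]).
        apply Q'; auto; try lra.
      + rewrite (RW_splity f a0 a1 b0 ((b0 + b1) / 2) b1); auto; try lra.
        rewrite (Q' a0 a1 b0 ((b0+b1)/2)), (Q' a0 a1 ((b0+b1)/2) b1); auto; try lra.
        all: try (apply (zf_bdnz f x0 x1 y0 y1); auto; lra). }
  destruct (nat_big ((x1 - x0 + (y1 - y0)) / d)) as [k Hk].
  pose proof (INR_le_pow2 k).
  assert (x1 - x0 + (y1 - y0) < 2 ^ k * d).
  { apply Rlt_le_trans with (INR k * d). 
    apply (Rmult_lt_compat_r d) in Hk; auto. unfold Rdiv in Hk. rewrite Rmult_assoc, Rinv_l, Rmult_1_r in Hk; lra.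
    apply Rmult_le_compat_r; lra. }
  apply (Qk k); lra.
Qed.

Lemma Rabs_bnd a b : Rabs a <= b -> - b <= a <= b.
Proof. intros H. pose proof (Rle_abs a). pose proof (Rle_abs (- a)). rewrite Rabs_Ropp in H1. lra. Qed.

Definition Mx (th : R) : R := (Rabs (cos th) + Rabs (sin th) + Rabs (Rabs (cos th) - Rabs (sin th))) / 2.

Lemma Mx_ge th : Rabs (cos th) <= Mx th /\ Rabs (sin th) <= Mx th.
Proof. unfold Mx. pose proof (Rle_abs (Rabs (cos th) - Rabs (sin th))).
  pose proof (Rle_abs (Rabs (sin th) - Rabs (cos th))). rewrite Rabs_minus_sym in H0. split; lra. Qed.

Lemma Mx_half th : 1/2 <= Mx th.
Proof.
  destruct (Mx_ge th) as [H1 H2]. pose proof (sin2_cos2 th). unfold Rsqr in H.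
  pose proof (Rsqr_abs (cos th)). pose proof (Rsqr_abs (sin th)). unfold Rsqr in *.
  pose proof (Rabs_pos (cos th)). pose proof (Rabs_pos (sin th)).
  destruct (Rle_dec (1/2) (Mx th)); auto. nra.
Qed.

Lemma Mx_cos th : Rabs (sin th) <= Rabs (cos th) -> Mx th = Rabs (cos th).
Proof. intros. unfold Mx. rewrite (Rabs_right (Rabs (cos th) - Rabs (sin th))) by lra. lra. Qed.

Lemma Mx_cont th : continuity_pt Mx th.
Proof.
  unfold Mx. apply continuity_pt_div; [|apply continuity_pt_const; intros u v; auto|lra].
  assert (Hc : continuity_pt (fun t => Rabs (cos t)) th)
    by (apply (continuity_pt_comp cos Rabs); [apply continuity_cos| apply Rcontinuity_abs]).
  assert (Hs : continuity_pt (fun t => Rabs (sin t)) th)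
    by (apply (continuity_pt_comp sin Rabs); [apply continuity_sin| apply Rcontinuity_abs]).
  apply continuity_pt_plus. apply continuity_pt_plus; auto.
  apply (continuity_pt_comp (fun t => Rabs (cos t) - Rabs (sin t)) Rabs).
  apply continuity_pt_minus; auto. apply Rcontinuity_abs.
Qed.

Lemma cos_rot th : cos (th + PI / 2) = - sin th.
Proof. rewrite cos_plus, cos_PI2, sin_PI2. ring. Qed.
Lemma sin_rot th : sin (th + PI / 2) = cos th.
Proof. rewrite sin_plus, cos_PI2, sin_PI2. ring. Qed.

Lemma Mx_rot th : Mx (th + PI / 2) = Mx th.
Proof. unfold Mx. rewrite cos_rot, sin_rot, Rabs_Ropp.
  replace (Rabs (sin th) - Rabs (cos th)) with (- (Rabs (cos th) - Rabs (sin th))) by ring.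
  rewrite Rabs_Ropp. lra. Qed.

Lemma quarter th : - (PI / 4) <= th <= PI / 4 -> 0 < cos th /\ Rabs (sin th) <= cos th.
Proof.
  intros H. pose proof PI_RGT_0.
  assert (A : 0 <= cos (th + PI / 4)) by (apply cos_ge_0; lra).
  assert (B : 0 <= cos (th - PI / 4)) by (apply cos_ge_0; lra).
  rewrite cos_plus, cos_PI4, sin_PI4 in A. rewrite cos_minus, cos_PI4, sin_PI4 in B.
  assert (S2 : 0 < 1 / sqrt 2) by (apply Rdiv_lt_0_compat; [lra|apply sqrt_lt_R0; lra]).
  assert (C1 : sin th <= cos th) by nra.
  assert (C2 : - sin th <= cos th) by nra.
  assert (Ha : Rabs (sin th) <= cos th) by (apply Rabs_le; lra).
  split; auto. destruct (Rle_lt_or_eq_dec 0 (cos th)); auto. apply (Rle_trans _ _ _ (Rabs_pos _) Ha).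
  exfalso. pose proof (sin2_cos2 th). unfold Rsqr in H1. rewrite <- e in *.
  pose proof (Rsqr_abs (sin th)). pose proof (Rabs_pos (sin th)). unfold Rsqr in H2.
  assert (Rabs (sin th) = 0) by lra. nra.
Qed.

Definition sq (al : C) (h t : R) : C :=
  Cplus al (Cmult (RtoC (h / Mx (2 * PI * t))) (ex (2 * PI * t))).

Lemma ex_cont (k : R) t : ccont (fun s => ex (k * s)) t.
Proof. apply ccont_comp_pt; simpl.
  - apply (continuity_pt_comp (fun s => k * s) cos). apply continuity_pt_mult.
    apply continuity_pt_const; intros u v; auto. apply continuity_pt_id. apply continuity_cos.
  - apply (continuity_pt_comp (fun s => k * s) sin). apply continuity_pt_mult.
    apply continuity_pt_const; intros u v; auto. apply continuity_pt_id. apply continuity_sin.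
Qed.

Lemma Mx_pos th : 0 < Mx th.
Proof. pose proof (Mx_half th); lra. Qed.

Lemma sq_cont al h : cont (sq al h).
Proof.
  intro t. unfold sq. apply ccont_plus. apply ccont_const. apply ccont_mult; [|apply ex_cont].
  apply ccont_RtoC. apply continuity_pt_div. apply continuity_pt_const; intros u v; auto.
  apply (continuity_pt_comp (fun s => 2 * PI * s) Mx). apply continuity_pt_mult.
  apply continuity_pt_const; intros u v; auto. apply continuity_pt_id. apply Mx_cont.
  apply Rgt_not_eq, Mx_pos.
Qed.

Definition phr (t : R) : R := (tan (2 * PI * clamp (-/8) (/8) t) + 1) / 2.

Lemma phr_cont t : continuity_pt phr t.
Proof.
  unfold phr. apply continuity_pt_div; [|apply continuity_pt_const; intros u v; auto|lra].
  apply continuity_pt_plus; [|apply continuity_pt_const; intros u v; auto].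
  apply (continuity_pt_comp (fun s => 2 * PI * clamp (-/8) (/8) s) tan).
  - apply continuity_pt_mult. apply continuity_pt_const; intros u v; auto. apply clamp_cont.
  - apply derivable_continuous_pt, derivable_pt_tan. pose proof (clamp_in (-/8) (/8) t ltac:(lra)).
    pose proof PI_RGT_0. split; nra.
Qed.

Lemma tan_quarter th : - (PI / 4) <= th <= PI / 4 -> -1 <= tan th <= 1.
Proof. intros H. destruct (quarter th H) as [H1 H2]. unfold tan. apply Rabs_bnd in H2.
  split; [apply Rmult_le_reg_r with (cos th)| apply Rmult_le_reg_r with (cos th)]; auto;
  unfold Rdiv; rewrite Rmult_assoc, Rinv_l; lra. Qed.

Lemma Ang_right (g : C -> C) (al : C) h : locLip g -> 0 < h ->
  segnz g (fst al + h, snd al - h) (fst al + h, snd al + h) ->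
  IsAng (fun t => g (sq al h t)) (-/8) (/8) (SA g (fst al + h, snd al - h) (fst al + h, snd al + h)).
Proof.
  intros Hg Hh Hnz. pose proof PI_RGT_0 as HPI.
  pose proof (SA_spec _ _ _ Hg Hnz) as H.
  pose proof (IsAng_reparam _ _ _ _ phr (-/8) (/8) H phr_cont) as H2.
  eapply IsAng_ext. apply H2.
  - lra.
  - unfold phr. rewrite clamp_id by lra. replace (2 * PI * - / 8) with (- (PI/4)) by field.
    rewrite tan_neg, tan_PI4. field.
  - unfold phr. rewrite clamp_id by lra. replace (2 * PI * / 8) with (PI/4) by field.
    rewrite tan_PI4. field.
  - intros t Ht. unfold phr. rewrite clamp_id by lra.
    pose proof (tan_quarter (2 * PI * t) ltac:(split; nra)). lra.
  - intros t Ht. simpl. f_equal. unfold phr. rewrite clamp_id by lra.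
    destruct (quarter (2 * PI * t) ltac:(split; nra)) as [Hc Hs].
    unfold sq, seg. rewrite Mx_cos by (rewrite (Rabs_right (cos _)); lra).
    rewrite Rabs_right by lra. unfold ex, tan. destruct al as [ax ay]. apply Ceq; simpl; field; lra.
Qed.

Definition rot (al u : C) : C := Cplus al (Cmult (0, 1) (Cminus u al)).

Lemma Cmod_i (z : C) : Cmod (Cmult (0, 1) z) = Cmod z.
Proof. rewrite Cmod_mult. replace (Cmod (0,1)) with 1. ring. unfold Cmod; simpl.
  replace (0 * (0 * 1) + 1 * (1 * 1)) with 1 by ring. rewrite sqrt_1; auto. Qed.

Lemma rot_diff al u v : Cminus (rot al u) (rot al v) = Cmult (0, 1) (Cminus u v).
Proof. unfold rot. ring. Qed.

Lemma locLip_rot f al : locLip f -> locLip (fun u => f (rot al u)).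
Proof.
  intros Hf B. destruct (Hf (2 * Cmod al + B)) as [L [HL HLs]]. exists L; split; auto.
  intros u v Hu Hv.
  assert (Hr : forall w, Cmod w <= B -> Cmod (rot al w) <= 2 * Cmod al + B).
  { intros w Hw. unfold rot. eapply Rle_trans. apply Cmod_triangle. rewrite Cmod_i.
    eapply Rle_trans. apply Rplus_le_compat_l. apply (Cmod_triangle w (Copp al)). rewrite Cmod_opp. lra. }
  eapply Rle_trans. apply HLs; auto. rewrite rot_diff, Cmod_i. lra.
Qed.

Lemma Ang_ext g1 g2 a b : (forall t, g1 t = g2 t) -> Ang g1 a b = Ang g2 a b.
Proof. intros H. f_equal. apply functional_extensionality; auto. Qed.

Lemma rot_seg al z w s : rot al (seg z w s) = seg (rot al z) (rot al w) s.
Proof. unfold rot, seg. ring. Qed.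

Lemma SA_rot f al z w : SA (fun u => f (rot al u)) z w = SA f (rot al z) (rot al w).
Proof. unfold SA. apply Ang_ext. intro t. rewrite rot_seg; auto. Qed.

Lemma sq_rot al h t : sq al h (t + /4) = rot al (sq al h t).
Proof.
  unfold sq, rot. replace (2 * PI * (t + /4)) with (2 * PI * t + PI / 2) by field.
  rewrite Mx_rot. unfold ex. rewrite cos_rot, sin_rot. apply Ceq; simpl; ring.
Qed.

Lemma sq_per al h t : sq al h (t + 1) = sq al h t.
Proof.
  unfold sq. replace (2 * PI * (t + 1)) with (2 * PI * t + 2 * INR 1 * PI) by (simpl; field).
  unfold Mx, ex. rewrite cos_period, sin_period. auto.
Qed.

Definition SQ (f : C -> C) (al : C) (h : R) : Prop :=
  forall x y, Rabs (x - fst al) <= h -> Rabs (y - snd al) <= h -> (x, y) <> al -> f (x, y) <> RtoC 0.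

Lemma SQ_rot f al h : SQ f al h -> SQ (fun u => f (rot al u)) al h.
Proof.
  intros H x y Hx Hy Hne. destruct al as [ax ay]; simpl in *.
  assert (E : rot (ax, ay) (x, y) = (ax - (y - ay), ay + (x - ax))) by (unfold rot; apply Ceq; simpl; ring).
  rewrite E. apply H; cbn [fst snd].
  - replace (ax - (y - ay) - ax) with (- (y - ay)) by ring. rewrite Rabs_Ropp; auto.
  - replace (ay + (x - ax) - ay) with (x - ax) by ring. auto.
  - intro E2. inversion E2. apply Hne. f_equal; lra.
Qed.

Lemma sq_in al h t : 0 < h -> Rabs (fst (sq al h t) - fst al) <= h /\ Rabs (snd (sq al h t) - snd al) <= h
  /\ sq al h t <> al.
Proof.
  intros Hh. destruct (Mx_ge (2 * PI * t)) as [H1 H2]. pose proof (Mx_pos (2 * PI * t)).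
  unfold sq, ex; destruct al as [ax ay]; simpl.
  replace (ax + (h / Mx (2 * PI * t) * cos (2 * PI * t) - 0 * sin (2 * PI * t)) - ax)
    with (h * (cos (2 * PI * t) / Mx (2 * PI * t))) by (field; lra).
  replace (ay + (h / Mx (2 * PI * t) * sin (2 * PI * t) + 0 * cos (2 * PI * t)) - ay)
    with (h * (sin (2 * PI * t) / Mx (2 * PI * t))) by (field; lra).
  rewrite !Rabs_mult, !Rabs_div by lra. rewrite (Rabs_right h) by lra. rewrite (Rabs_right (Mx _)) by lra.
  split; [|split].
  - assert (Rabs (cos (2 * PI * t)) / Mx (2 * PI * t) <= 1).
    { apply Rmult_le_reg_r with (Mx (2*PI*t)); auto. unfold Rdiv; rewrite Rmult_assoc, Rinv_l; lra. } nra.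
  - assert (Rabs (sin (2 * PI * t)) / Mx (2 * PI * t) <= 1).
    { apply Rmult_le_reg_r with (Mx (2*PI*t)); auto. unfold Rdiv; rewrite Rmult_assoc, Rinv_l; lra. } nra.
  - intro E. inversion E as [[Q1 Q2]]. pose proof (sin2_cos2 (2 * PI * t)) as S. unfold Rsqr in S.
    assert (Z1 : h / Mx (2 * PI * t) * cos (2 * PI * t) = 0) by lra.
    assert (Z2 : h / Mx (2 * PI * t) * sin (2 * PI * t) = 0) by lra.
    assert (P : 0 < h / Mx (2 * PI * t)) by (apply Rdiv_lt_0_compat; lra).
    apply Rmult_integral in Z1. apply Rmult_integral in Z2. destruct Z1, Z2; nra.
Qed.

Lemma IsAng_shift G a b c X : IsAng (fun t => G (t + c)) a b X -> IsAng G (a + c) (b + c) X.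
Proof.
  intros H. pose proof (IsAng_reparam _ _ _ _ (fun t => t - c) (a + c) (b + c) H) as H2.
  eapply IsAng_ext. apply H2.
  - intro t. apply continuity_pt_minus. apply continuity_pt_id. apply continuity_pt_const; intros u v; auto.
  - destruct H; lra.
  - ring.
  - ring.
  - intros; lra.
  - intros t _. simpl. f_equal. ring.
Qed.

Lemma quarter_gen g al h : locLip g -> 0 < h -> SQ g al h ->
  IsAng (fun t => g (sq al h t)) (-/8) (/8) (SA g (fst al + h, snd al - h) (fst al + h, snd al + h)).
Proof.
  intros Hg Hh HS. apply Ang_right; auto.
  intros s Hs. destruct al as [ax ay]; simpl. rewrite seg_v. apply HS; simpl.
  - replace (ax + h - ax) with h by ring. rewrite Rabs_right; lra.
  - apply Rabs_le. split; nra.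
  - intro E; inversion E. lra.
Qed.

Lemma sq_RW f al h : locLip f -> 0 < h -> SQ f al h ->
  Ang (fun t => f (sq al h t)) 0 1 = RW f (fst al - h) (fst al + h) (snd al - h) (snd al + h).
Proof.
  intros Hf Hh HS. destruct al as [ax ay]. cbn [fst snd].
  set (G := fun t => f (sq (ax, ay) h t)).
  assert (HG : cont G) by (intro t; apply locLip_comp; auto; apply sq_cont).
  assert (HnzG : forall a b, nz G a b).
  { intros a b t _. unfold G. destruct (sq_in (ax, ay) h t Hh) as [A [B C]].
    destruct (sq (ax, ay) h t) as [x y] eqn:E. apply HS; auto. }
  set (f1 := fun u => f (rot (ax, ay) u)).
  set (f2 := fun u => f1 (rot (ax, ay) u)).
  set (f3 := fun u => f2 (rot (ax, ay) u)).
  assert (L1 : locLip f1) by (apply locLip_rot; auto).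
  assert (L2 : locLip f2) by (apply locLip_rot; auto).
  assert (L3 : locLip f3) by (apply locLip_rot; auto).
  assert (S1 : SQ f1 (ax, ay) h) by (apply SQ_rot; auto).
  assert (S2 : SQ f2 (ax, ay) h) by (apply SQ_rot; auto).
  assert (S3 : SQ f3 (ax, ay) h) by (apply SQ_rot; auto).
  assert (R0 : rot (ax, ay) (ax + h, ay - h) = (ax + h, ay + h)) by (unfold rot; apply Ceq; simpl; ring).
  assert (R1 : rot (ax, ay) (ax + h, ay + h) = (ax - h, ay + h)) by (unfold rot; apply Ceq; simpl; ring).
  assert (R2 : rot (ax, ay) (ax - h, ay + h) = (ax - h, ay - h)) by (unfold rot; apply Ceq; simpl; ring).
  assert (R3 : rot (ax, ay) (ax - h, ay - h) = (ax + h, ay - h)) by (unfold rot; apply Ceq; simpl; ring).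
  pose proof (quarter_gen f (ax, ay) h Hf Hh HS) as Q0.
  pose proof (quarter_gen f1 (ax, ay) h L1 Hh S1) as Q1.
  pose proof (quarter_gen f2 (ax, ay) h L2 Hh S2) as Q2.
  pose proof (quarter_gen f3 (ax, ay) h L3 Hh S3) as Q3.
  cbn [fst snd] in Q0, Q1, Q2, Q3.
  assert (E1 : forall z w, SA f1 z w = SA f (rot (ax, ay) z) (rot (ax, ay) w)) by (intros; apply SA_rot).
  assert (E2 : forall z w, SA f2 z w = SA f1 (rot (ax, ay) z) (rot (ax, ay) w)) by (intros; apply SA_rot).
  assert (E3 : forall z w, SA f3 z w = SA f2 (rot (ax, ay) z) (rot (ax, ay) w)) by (intros; apply SA_rot).
  rewrite E1, R0, R1 in Q1. rewrite E2, E1, R0, R1, R2 in Q2. rewrite E3, E2, E1, R0, R1, R2, R3 in Q3.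
  assert (A1 : Ang G (/8) (3/8) = SA f (ax + h, ay + h) (ax - h, ay + h)).
  { apply Ang_eq. replace (/8) with (-/8 + /4) by field. replace (3/8) with (/8 + /4) by field.
    apply IsAng_shift. eapply IsAng_ext. apply Q1. intros t _. unfold G, f1. rewrite sq_rot; auto. }
  assert (A2 : Ang G (3/8) (5/8) = SA f (ax - h, ay + h) (ax - h, ay - h)).
  { apply Ang_eq. replace (3/8) with (-/8 + /2) by field. replace (5/8) with (/8 + /2) by field.
    apply IsAng_shift. eapply IsAng_ext. apply Q2. intros t _. unfold G, f2, f1.
    replace (t + /2) with (t + /4 + /4) by field. rewrite !sq_rot; auto. }
  assert (A3 : Ang G (5/8) (7/8) = SA f (ax - h, ay - h) (ax + h, ay - h)).
  { apply Ang_eq. replace (5/8) with (-/8 + 3/4) by field. replace (7/8) with (/8 + 3/4) by field.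
    apply IsAng_shift. eapply IsAng_ext. apply Q3. intros t _. unfold G, f3, f2, f1.
    replace (t + 3/4) with (t + /4 + /4 + /4) by field. rewrite !sq_rot; auto. }
  assert (A0 : Ang G (-/8) (/8) = SA f (ax + h, ay - h) (ax + h, ay + h)) by (apply Ang_eq; auto).
  assert (A4 : Ang G (7/8) 1 = Ang G (-/8) 0).
  { apply Ang_eq. replace (7/8) with (-/8 + 1) by field. replace 1 with (0 + 1) at 2 by ring.
    apply IsAng_shift. eapply IsAng_ext. apply Ang_spec; auto. lra.
    intros t _. unfold G. rewrite sq_per; auto. }
  rewrite (Ang_add G 0 (/8) 1), (Ang_add G (/8) (3/8) 1), (Ang_add G (3/8) (5/8) 1),
    (Ang_add G (5/8) (7/8) 1); try lra; auto.
  rewrite (Ang_add G (-/8) 0 (/8)) in A0; try lra; auto.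
  unfold RW. lra.
Qed.

Lemma cd_of_IsAng g a r d : IsAng (fun t => g (circ a r t)) 0 1 (2 * PI * IZR d) -> circle_degree g a r d.
Proof. intros [_ [Hnz [th [[Hc Hl] E]]]]. split; auto. exists th. split; auto. Qed.

Lemma IsAng_of_cd g a r d : circle_degree g a r d -> IsAng (fun t => g (circ a r t)) 0 1 (2 * PI * IZR d).
Proof. intros [Hnz [th [Hc [Hl E]]]]. split; [lra|]. split; auto. exists th. split; auto. split; auto. Qed.

Lemma has_sm_uniq g a k1 k2 : has_sm g a k1 -> has_sm g a k2 -> k1 = k2.
Proof.
  intros [r1 [Hr1 H1]] [r2 [Hr2 H2]].
  set (r := Rmin r1 r2 / 2).
  assert (0 < r < r1) by (unfold r; pose proof (Rmin_l r1 r2); pose proof (Rmin_pos r1 r2 Hr1 Hr2); lra).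
  assert (0 < r < r2) by (unfold r; pose proof (Rmin_r r1 r2); pose proof (Rmin_pos r1 r2 Hr1 Hr2); lra).
  pose proof (IsAng_uniq _ _ _ _ _ (IsAng_of_cd _ _ _ _ (H1 r H)) (IsAng_of_cd _ _ _ _ (H2 r H0))).
  pose proof PI_RGT_0. apply eq_IZR. nra.
Qed.

Lemma sm_eq g a k : has_sm g a k -> sm g a = k.
Proof. intros H. unfold sm. apply (has_sm_uniq g a). apply epsilon_spec. exists k; auto. auto. Qed.

Lemma circ_closed a r : circ a r 0 = circ a r 1.
Proof. unfold circ. rewrite Rmult_0_r, Rmult_1_r, cos_0, sin_0, cos_2PI, sin_2PI. auto. Qed.

Definition hcurve (al : C) (r h s t : R) : C :=
  Cplus al (Cmult (RtoC ((1 - s) * r + s * (h / Mx (2 * PI * t)))) (ex (2 * PI * t))).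

Lemma hcurve_cont al r h s : cont (hcurve al r h s).
Proof.
  intro t. unfold hcurve. apply ccont_plus. apply ccont_const. apply ccont_mult; [|apply ex_cont].
  apply ccont_RtoC. apply continuity_pt_plus. apply continuity_pt_const; intros u v; auto.
  apply continuity_pt_mult. apply continuity_pt_const; intros u v; auto.
  apply continuity_pt_div. apply continuity_pt_const; intros u v; auto.
  apply (continuity_pt_comp (fun s => 2 * PI * s) Mx). apply continuity_pt_mult.
  apply continuity_pt_const; intros u v; auto. apply continuity_pt_id. apply Mx_cont.
  apply Rgt_not_eq, Mx_pos.
Qed.

Lemma Cmod_pair_sq x y : Cmod (x, y) * Cmod (x, y) = x * x + y * y.
Proof. apply (Cmod_sq (x, y)). Qed.

Lemma circle_sq f al h r : locLip f -> 0 < r <= h -> SQ f al h ->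
  IsAng (fun t => f (circ al r t)) 0 1 (RW f (fst al - h) (fst al + h) (snd al - h) (snd al + h)).
Proof.
  intros Hf Hr HS. assert (Hh : 0 < h) by lra.
  set (F := fun s t => f (hcurve al r h (1 - s) t)).
  assert (Hrho : forall s t, 0 <= s <= 1 -> 0 < (1 - s) * r + s * (h / Mx (2 * PI * t)) <= r + 2 * h).
  { intros s t Hs. pose proof (Mx_half (2 * PI * t)). pose proof (Mx_pos (2 * PI * t)).
    assert (0 < h / Mx (2 * PI * t) <= 2 * h).
    { split. apply Rdiv_lt_0_compat; lra. apply Rmult_le_reg_r with (Mx (2 * PI * t)); auto.
      unfold Rdiv; rewrite Rmult_assoc, Rinv_l; nra. }
    set (q := h / Mx (2 * PI * t)) in *.
    pose proof (Rmin_l r q). pose proof (Rmin_r r q). pose proof (Rmin_pos r q ltac:(lra) ltac:(lra)).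
    assert ((1-s)*r >= (1-s)*Rmin r q) by nra. assert (s*q >= s*Rmin r q) by nra.
    split; nra. }
  assert (HB : forall s t, 0 <= s <= 1 -> Cmod (hcurve al r h s t) <= Cmod al + (r + 2 * h)).
  { intros s t Hs. unfold hcurve. eapply Rle_trans. apply Cmod_triangle. rewrite Cmod_mult, Cmod_ex, Cmod_RtoC.
    pose proof (Hrho s t Hs). rewrite Rabs_right by lra. lra. }
  destruct (Hf (Cmod al + (r + 2 * h))) as [L [HL HLip]].
  assert (H1 : IsAng (F 0) 0 1 (RW f (fst al - h) (fst al + h) (snd al - h) (snd al + h))).
  { rewrite <- sq_RW; auto. apply IsAng_ext with (fun t => f (sq al h t)).
    apply Ang_spec. lra. intro t; apply locLip_comp; auto; apply sq_cont.
    intros t _. destruct (sq_in al h t Hh) as [A [B C]]. destruct (sq al h t) as [x y]. apply HS; auto.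
    intros t _. unfold F, hcurve, sq.
    replace ((1 - (1 - 0)) * r + (1 - 0) * (h / Mx (2 * PI * t))) with (h / Mx (2*PI*t)) by ring; auto. }
  pose proof (homotopy F (L * (r + 2 * h)) (RW f (fst al - h) (fst al + h) (snd al - h) (snd al + h))) as Hom.
  eapply IsAng_ext. apply Hom; auto.
  - nra.
  - intros s t. unfold F. apply locLip_comp; auto. apply hcurve_cont.
  - intros s Hs. unfold F, hcurve. replace (2 * PI * 1) with (2 * PI * 0 + 2 * INR 1 * PI) by (simpl; ring).
    unfold Mx, ex. rewrite cos_period, sin_period. auto.
  - intros s s' t Hs Hs' Ht. unfold F. eapply Rle_trans. apply HLip; apply HB; lra.
    unfold hcurve. replace (Cminus _ _) with (Cmult (RtoC ((s - s') * (r - h / Mx (2 * PI * t)))) (ex (2 * PI * t)))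
      by (apply Ceq; simpl; ring).
    rewrite Cmod_mult, Cmod_ex, Cmod_RtoC, Rabs_mult.
    pose proof (Hrho 1 t ltac:(lra)). pose proof (Rabs_pos (s - s')).
    assert (Rabs (r - h / Mx (2 * PI * t)) <= r + 2 * h) by (apply Rabs_le; split; nra).
    rewrite Rmult_1_r. assert (Rabs (s - s') * Rabs (r - h / Mx (2 * PI * t)) <= Rabs (s - s') * (r + 2 * h)) by
      (apply Rmult_le_compat_l; auto). nra.
  - intros s t Hs Ht. unfold F. set (s1 := 1 - s).
    assert (Hs1 : 0 <= s1 <= 1) by (unfold s1; lra).
    pose proof (Hrho s1 t Hs1) as [P1 P2].
    set (rho := (1 - s1) * r + s1 * (h / Mx (2 * PI * t))) in *.
    destruct (Mx_ge (2 * PI * t)) as [M1 M2]. pose proof (Mx_pos (2 * PI * t)).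
    assert (Hle : forall c, Rabs c <= Mx (2 * PI * t) -> Rabs (rho * c) <= h).
    { intros c Hc. rewrite Rabs_mult, Rabs_right by lra. unfold rho.
      assert (Rabs c <= 1). { pose proof (Mx_ge (2 * PI * t)). unfold Mx in *.
        pose proof (sin2_cos2 (2 * PI * t)). 
        assert (Mx (2 * PI * t) <= 1).
        { unfold Mx. pose proof (Rsqr_abs (cos (2 * PI * t))). pose proof (Rsqr_abs (sin (2 * PI * t))).
          unfold Rsqr in *. pose proof (Rabs_pos (cos (2 * PI * t))). pose proof (Rabs_pos (sin (2 * PI * t))).
          unfold Rabs at 3; destruct Rcase_abs; nra. }
        unfold Mx in H3. lra. }
      assert (h / Mx (2 * PI * t) * Rabs c <= h).
      { apply Rmult_le_reg_r with (Mx (2 * PI * t)); auto. replace (h / Mx (2 * PI * t) * Rabs c * Mx (2 * PI * t))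
          with (h * Rabs c) by (field; lra). nra. }
      pose proof (Rabs_pos c).
      assert ((1 - s1) * r * Rabs c <= (1 - s1) * h).
      { rewrite Rmult_assoc. apply Rmult_le_compat_l. lra. nra. }
      assert (s1 * (h / Mx (2 * PI * t)) * Rabs c <= s1 * h).
      { rewrite Rmult_assoc. apply Rmult_le_compat_l; lra. }
      nra. }
    unfold hcurve. fold rho.
    destruct al as [ax ay]. unfold ex.
    replace (Cplus (ax, ay) (Cmult (RtoC rho) (cos (2 * PI * t), sin (2 * PI * t))))
      with ((ax + rho * cos (2 * PI * t), ay + rho * sin (2 * PI * t)) : C) by (apply Ceq; simpl; ring).
    apply HS; cbn [fst snd].
    + replace (ax + rho * cos (2 * PI * t) - ax) with (rho * cos (2 * PI * t)) by ring. apply Hle; auto.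
    + replace (ay + rho * sin (2 * PI * t) - ay) with (rho * sin (2 * PI * t)) by ring. apply Hle; auto.
    + intro E. inversion E as [[E1 E2]]. pose proof (sin2_cos2 (2 * PI * t)). unfold Rsqr in H0.
      assert (rho * cos (2 * PI * t) = 0) by lra. assert (rho * sin (2 * PI * t) = 0) by lra.
      apply Rmult_integral in H2. apply Rmult_integral in H3. destruct H2, H3; nra.
  - replace (1 - 0) with 1 by ring. auto.
  - intros t _. unfold F, hcurve, circ.
    replace ((1 - (1 - 1)) * r + (1 - 1) * (h / Mx (2 * PI * t))) with r by ring; auto.
Qed.

Lemma square_sm f al h : locLip f -> 0 < h -> SQ f al h ->
  RW f (fst al - h) (fst al + h) (snd al - h) (snd al + h) = 2 * PI * IZR (sm f al).
Proof.
  intros Hf Hh HS.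
  pose proof (circle_sq f al h h Hf ltac:(lra) HS) as H.
  destruct (IsAng_closed _ _ H (f_equal f (circ_closed al h))) as [k Hk].
  assert (Hsm : has_sm f al k).
  { exists h. split; auto. intros r Hr. apply cd_of_IsAng. rewrite <- Hk.
    apply circle_sq; auto. lra. }
  rewrite (sm_eq _ _ _ Hsm). auto.
Qed.

Definition zin (f : C -> C) (Z : list C) x0 x1 y0 y1 :=
  forall x y, x0 <= x <= x1 -> y0 <= y <= y1 -> f (x, y) = RtoC 0 -> In ((x, y) : C) Z.
Definition Zin (Z : list C) x0 x1 y0 y1 :=
  forall z, In z Z -> x0 < fst z < x1 /\ y0 < snd z < y1.

Lemma bdnz_Z f Z x0 x1 y0 y1 a0 a1 b0 b1 : zin f Z x0 x1 y0 y1 ->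
  x0 <= a0 -> a1 <= x1 -> y0 <= b0 -> b1 <= y1 ->
  (forall z, In z Z -> ~ (a0 <= fst z <= a1 /\ b0 <= snd z <= b1 /\
       (fst z = a0 \/ fst z = a1 \/ snd z = b0 \/ snd z = b1))) ->
  bdnz f a0 a1 b0 b1.
Proof.
  intros Hz ? ? ? ? HZ x y Hx Hy Hb E. apply Hz in E; try lra.
  apply (HZ _ E). simpl. auto.
Qed.

Lemma zf_Z f Z x0 x1 y0 y1 a0 a1 b0 b1 : zin f Z x0 x1 y0 y1 ->
  x0 <= a0 -> a1 <= x1 -> y0 <= b0 -> b1 <= y1 ->
  (forall z, In z Z -> ~ (a0 <= fst z <= a1 /\ b0 <= snd z <= b1)) ->
  forall x y, a0 <= x <= a1 -> b0 <= y <= b1 -> f (x, y) <> RtoC 0.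
Proof.
  intros Hz ? ? ? ? HZ x y Hx Hy E. apply Hz in E; try lra.
  apply (HZ _ E). simpl. auto.
Qed.

Lemma avoid (l : list R) : forall p q, p < q -> exists c, p < c < q /\ ~ In c l.
Proof.
  induction l as [|a l IH]; intros p q Hpq.
  - exists ((p + q) / 2). split. lra. auto.
  - destruct (IH p q Hpq) as [c [Hc Hn]]. destruct (Req_dec c a) as [E|E].
    + destruct (IH p c ltac:(lra)) as [c2 [Hc2 Hn2]]. exists c2. split. lra.
      intros [E2|E2]; [lra|auto].
    + exists c. split; auto. intros [E'|E']; [lra|auto].
Qed.

Lemma SM_split f (p : C -> bool) zl : SM f zl = (SM f (filter p zl) + SM f (filter (fun z => negb (p z)) zl))%Z.
Proof. induction zl as [|a zl IH]; simpl; auto. destruct (p a); simpl; rewrite IH; lia. Qed.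

Lemma filter_lt {A} (p : A -> bool) (l : list A) b : In b l -> p b = false -> (length (filter p l) < length l)%nat.
Proof.
  induction l as [|a l IH]; simpl; intros Hb Hp. contradiction.
  pose proof (filter_length_le p l) as Hle. destruct Hb as [E|E].
  - subst. rewrite Hp. lia.
  - destruct (p a); simpl; specialize (IH E Hp); lia.
Qed.

Definition ltx (c : R) (z : C) : bool := if Rlt_dec (fst z) c then true else false.
Definition lty (c : R) (z : C) : bool := if Rlt_dec (snd z) c then true else false.

Lemma ltx_true c z : ltx c z = true <-> fst z < c.
Proof. unfold ltx. destruct Rlt_dec; split; intros; auto; try discriminate; lra. Qed.
Lemma lty_true c z : lty c z = true <-> snd z < c.
Proof. unfold lty. destruct Rlt_dec; split; intros; auto; try discriminate; lra. Qed.

Definition IHtype (f : C -> C) (n : nat) := forall zl, (length zl <= n)%nat -> NoDup zl ->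
  forall x0 x1 y0 y1, x0 < x1 -> y0 < y1 -> zin f zl x0 x1 y0 y1 -> Zin zl x0 x1 y0 y1 ->
  RW f x0 x1 y0 y1 = 2 * PI * IZR (SM f zl).

Lemma stepx f n zl x0 x1 y0 y1 : IHtype f n -> locLip f -> (length zl <= S n)%nat -> NoDup zl ->
  x0 < x1 -> y0 < y1 -> zin f zl x0 x1 y0 y1 -> Zin zl x0 x1 y0 y1 ->
  forall a b, In a zl -> In b zl -> fst a < fst b -> RW f x0 x1 y0 y1 = 2 * PI * IZR (SM f zl).
Proof.
  intros IH Hf Hlen Hnd Hx Hy Hz HZ a b Ha Hb Hab.
  destruct (avoid (map fst zl) (fst a) (fst b) Hab) as [c [Hc Hcn]].
  assert (Hnc : forall z, In z zl -> fst z <> c).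
  { intros z Hzz E. apply Hcn. rewrite <- E. apply in_map; auto. }
  pose proof (HZ a Ha). pose proof (HZ b Hb).
  set (p := ltx c).
  assert (L1 : (length (filter p zl) <= n)%nat).
  { pose proof (filter_lt p zl b Hb). assert (p b = false).
    { unfold p. destruct (ltx c b) eqn:E; auto. apply ltx_true in E. lra. } specialize (H1 H2). lia. }
  assert (L2 : (length (filter (fun z => negb (p z)) zl) <= n)%nat).
  { pose proof (filter_lt (fun z => negb (p z)) zl a Ha). assert (negb (p a) = false).
    { unfold p. destruct (ltx c a) eqn:E; auto. apply not_true_iff_false in E.
      exfalso; apply E, ltx_true; lra. } specialize (H1 H2). lia. }
  rewrite (RW_splitx f x0 c x1); try lra; auto.
  2,3: apply (bdnz_Z f zl x0 x1 y0 y1); auto; try lra;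
       intros z Hzz [B1 [B2 B3]]; specialize (HZ z Hzz); specialize (Hnc z Hzz); lra.
  assert (R1 : RW f x0 c y0 y1 = 2 * PI * IZR (SM f (filter p zl))).
  { apply IH; auto; try apply NoDup_filter; auto; try lra.
    - intros x y Hxx Hyy E. apply filter_In. split. apply Hz; auto; lra.
      pose proof (Hnc (x, y)) as Q. unfold p. destruct (ltx c (x, y)) eqn:E2; auto. exfalso.
      apply not_true_iff_false in E2. apply E2. apply ltx_true. simpl.
      assert (Q2 : In ((x, y) : C) zl) by (apply Hz; auto; lra). specialize (Q Q2). simpl in Q. lra.
    - intros z Hzz. apply filter_In in Hzz as [Hzz Hp]. specialize (HZ z Hzz).
      unfold p in Hp. apply ltx_true in Hp. lra. }
  assert (R2 : RW f c x1 y0 y1 = 2 * PI * IZR (SM f (filter (fun z => negb (p z)) zl))).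
  { apply IH; auto; try apply NoDup_filter; auto; try lra.
    - intros x y Hxx Hyy E. apply filter_In. split. apply Hz; auto; lra.
      assert (Q2 : In ((x, y) : C) zl) by (apply Hz; auto; lra). pose proof (Hnc _ Q2) as Q. simpl in Q.
      unfold p. destruct (ltx c (x, y)) eqn:E2; auto. apply ltx_true in E2. simpl in E2. lra.
    - intros z Hzz. apply filter_In in Hzz as [Hzz Hp]. specialize (HZ z Hzz). specialize (Hnc z Hzz).
      unfold p in Hp. destruct (ltx c z) eqn:E2; try discriminate. apply not_true_iff_false in E2.
      assert (~ fst z < c) by (intro; apply E2, ltx_true; auto). lra. }
  rewrite R1, R2, (SM_split f p zl), plus_IZR. ring.
Qed.

Lemma stepy f n zl x0 x1 y0 y1 : IHtype f n -> locLip f -> (length zl <= S n)%nat -> NoDup zl ->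
  x0 < x1 -> y0 < y1 -> zin f zl x0 x1 y0 y1 -> Zin zl x0 x1 y0 y1 ->
  forall a b, In a zl -> In b zl -> snd a < snd b -> RW f x0 x1 y0 y1 = 2 * PI * IZR (SM f zl).
Proof.
  intros IH Hf Hlen Hnd Hx Hy Hz HZ a b Ha Hb Hab.
  destruct (avoid (map snd zl) (snd a) (snd b) Hab) as [c [Hc Hcn]].
  assert (Hnc : forall z, In z zl -> snd z <> c).
  { intros z Hzz E. apply Hcn. rewrite <- E. apply in_map; auto. }
  pose proof (HZ a Ha). pose proof (HZ b Hb).
  set (p := lty c).
  assert (L1 : (length (filter p zl) <= n)%nat).
  { pose proof (filter_lt p zl b Hb). assert (p b = false).
    { unfold p. destruct (lty c b) eqn:E; auto. apply lty_true in E. lra. } specialize (H1 H2). lia. }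
  assert (L2 : (length (filter (fun z => negb (p z)) zl) <= n)%nat).
  { pose proof (filter_lt (fun z => negb (p z)) zl a Ha). assert (negb (p a) = false).
    { unfold p. destruct (lty c a) eqn:E; auto. apply not_true_iff_false in E.
      exfalso; apply E, lty_true; lra. } specialize (H1 H2). lia. }
  rewrite (RW_splity f x0 x1 y0 c y1); try lra; auto.
  2,3: apply (bdnz_Z f zl x0 x1 y0 y1); auto; try lra;
       intros z Hzz [B1 [B2 B3]]; specialize (HZ z Hzz); specialize (Hnc z Hzz); lra.
  assert (R1 : RW f x0 x1 y0 c = 2 * PI * IZR (SM f (filter p zl))).
  { apply IH; auto; try apply NoDup_filter; auto; try lra.
    - intros x y Hxx Hyy E. apply filter_In. split. apply Hz; auto; lra.
      pose proof (Hnc (x, y)) as Q. unfold p. destruct (lty c (x, y)) eqn:E2; auto. exfalso.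
      apply not_true_iff_false in E2. apply E2. apply lty_true. simpl.
      assert (Q2 : In ((x, y) : C) zl) by (apply Hz; auto; lra). specialize (Q Q2). simpl in Q. lra.
    - intros z Hzz. apply filter_In in Hzz as [Hzz Hp]. specialize (HZ z Hzz).
      unfold p in Hp. apply lty_true in Hp. lra. }
  assert (R2 : RW f x0 x1 c y1 = 2 * PI * IZR (SM f (filter (fun z => negb (p z)) zl))).
  { apply IH; auto; try apply NoDup_filter; auto; try lra.
    - intros x y Hxx Hyy E. apply filter_In. split. apply Hz; auto; lra.
      assert (Q2 : In ((x, y) : C) zl) by (apply Hz; auto; lra). pose proof (Hnc _ Q2) as Q. simpl in Q.
      unfold p. destruct (lty c (x, y)) eqn:E2; auto. apply lty_true in E2. simpl in E2. lra.
    - intros z Hzz. apply filter_In in Hzz as [Hzz Hp]. specialize (HZ z Hzz). specialize (Hnc z Hzz).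
      unfold p in Hp. destruct (lty c z) eqn:E2; try discriminate. apply not_true_iff_false in E2.
      assert (~ snd z < c) by (intro; apply E2, lty_true; auto). lra. }
  rewrite R1, R2, (SM_split f p zl), plus_IZR. ring.
Qed.

Lemma case_nil f x0 x1 y0 y1 : locLip f -> x0 < x1 -> y0 < y1 -> zin f [] x0 x1 y0 y1 ->
  RW f x0 x1 y0 y1 = 2 * PI * IZR (SM f []).
Proof.
  intros Hf Hx Hy Hz. simpl. rewrite Rmult_0_r. apply RW_zero_free; auto; try lra.
Qed.

Lemma case_one f al x0 x1 y0 y1 : locLip f -> x0 < x1 -> y0 < y1 -> zin f [al] x0 x1 y0 y1 ->
  Zin [al] x0 x1 y0 y1 -> RW f x0 x1 y0 y1 = 2 * PI * IZR (SM f [al]).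
Proof.
  intros Hf Hx Hy Hz HZ. destruct (HZ al (or_introl eq_refl)) as [Ax Ay].
  destruct al as [ax ay]; cbn [fst snd] in *.
  set (h := Rmin (Rmin (ax - x0) (x1 - ax)) (Rmin (ay - y0) (y1 - ay)) / 2).
  assert (Hh : 0 < h /\ h < ax - x0 /\ h < x1 - ax /\ h < ay - y0 /\ h < y1 - ay).
  { unfold h. pose proof (Rmin_l (Rmin (ax - x0) (x1 - ax)) (Rmin (ay - y0) (y1 - ay))).
    pose proof (Rmin_r (Rmin (ax - x0) (x1 - ax)) (Rmin (ay - y0) (y1 - ay))).
    pose proof (Rmin_l (ax - x0) (x1 - ax)). pose proof (Rmin_r (ax - x0) (x1 - ax)).
    pose proof (Rmin_l (ay - y0) (y1 - ay)). pose proof (Rmin_r (ay - y0) (y1 - ay)).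
    assert (0 < Rmin (Rmin (ax - x0) (x1 - ax)) (Rmin (ay - y0) (y1 - ay))).
    { apply Rmin_pos; apply Rmin_pos; lra. } lra. }
  destruct Hh as [H0 [H1 [H2 [H3 H4]]]].
  assert (NB : forall a0 a1 b0 b1, x0 <= a0 -> a1 <= x1 -> y0 <= b0 -> b1 <= y1 ->
     ~ (a0 <= ax <= a1 /\ b0 <= ay <= b1 /\ (ax = a0 \/ ax = a1 \/ ay = b0 \/ ay = b1)) ->
     bdnz f a0 a1 b0 b1).
  { intros. apply (bdnz_Z f [(ax, ay)] x0 x1 y0 y1); auto. intros z [<-|[]]; auto. }
  assert (ZF : forall a0 a1 b0 b1, x0 <= a0 <= a1 -> a1 <= x1 -> y0 <= b0 <= b1 -> b1 <= y1 ->
     ~ (a0 <= ax <= a1 /\ b0 <= ay <= b1) -> RW f a0 a1 b0 b1 = 0).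
  { intros. apply RW_zero_free; auto; try lra. apply (zf_Z f [(ax, ay)] x0 x1 y0 y1); auto; try lra.
    intros z [<-|[]]; auto. }
  rewrite (RW_splitx f x0 (ax - h) x1); try lra; auto; try (apply NB; lra).
  rewrite (RW_splitx f (ax - h) (ax + h) x1); try lra; auto; try (apply NB; lra).
  rewrite (RW_splity f (ax - h) (ax + h) y0 (ay - h) y1); try lra; auto; try (apply NB; lra).
  rewrite (RW_splity f (ax - h) (ax + h) (ay - h) (ay + h) y1); try lra; auto; try (apply NB; lra).
  rewrite (ZF x0 (ax - h) y0 y1), (ZF (ax + h) x1 y0 y1), (ZF (ax - h) (ax + h) y0 (ay - h)),
    (ZF (ax - h) (ax + h) (ay + h) y1); try lra.
  pose proof (square_sm f (ax, ay) h Hf H0) as Hs. cbn [fst snd] in Hs. rewrite Hs.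
  - simpl. rewrite Z.add_0_r. ring.
  - intros x y Hxx Hyy Hne E. apply Rabs_bnd in Hxx. apply Rabs_bnd in Hyy. cbn [fst snd] in *.
    apply Hz in E; try lra. destruct E as [E|[]]. auto.
Qed.

Lemma main_rect f : locLip f -> forall n, IHtype f n.
Proof.
  intros Hf n. induction n as [|n IH]; intros zl Hlen Hnd x0 x1 y0 y1 Hx Hy Hz HZ.
  - destruct zl; simpl in Hlen; [|lia]. apply case_nil; auto.
  - destruct zl as [|a [|b rest]].
    + apply case_nil; auto.
    + apply case_one; auto.
    + assert (Hab : a <> b) by (inversion Hnd; subst; intro E; subst; apply H1; left; auto).
      assert (Ina : In a (a :: b :: rest)) by (left; auto).
      assert (Inb : In b (a :: b :: rest)) by (right; left; auto).
      destruct (Rtotal_order (fst a) (fst b)) as [Hlt|[Heq|Hgt]].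
      * apply (stepx f n _ x0 x1 y0 y1 IH Hf Hlen Hnd Hx Hy Hz HZ a b); auto.
      * destruct (Rtotal_order (snd a) (snd b)) as [Hlt'|[Heq'|Hgt']].
        -- apply (stepy f n _ x0 x1 y0 y1 IH Hf Hlen Hnd Hx Hy Hz HZ a b); auto.
        -- exfalso. apply Hab. destruct a, b; simpl in *; subst; auto.
        -- apply (stepy f n _ x0 x1 y0 y1 IH Hf Hlen Hnd Hx Hy Hz HZ b a); auto.
      * apply (stepx f n _ x0 x1 y0 y1 IH Hf Hlen Hnd Hx Hy Hz HZ b a); auto.
Qed.

Lemma locLip_bounded f : locLip f -> forall B, exists M, 0 <= M /\ forall u, Cmod u <= B -> Cmod (f u) <= M.
Proof.
  intros Hf B. destruct (Hf (Rmax B 0)) as [L [HL HLs]]. exists (Cmod (f (RtoC 0)) + L * Rmax B 0).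
  split. pose proof (Cmod_ge_0 (f (RtoC 0))). pose proof (Rmax_r B 0). nra.
  intros u Hu. pose proof (Rmax_l B 0). pose proof (Rmax_r B 0).
  assert (Cmod (Cminus (f u) (f (RtoC 0))) <= L * Rmax B 0).
  { eapply Rle_trans. apply HLs; try lra. rewrite Cmod_0; lra.
    replace (Cminus u (RtoC 0)) with u by ring. apply Rmult_le_compat_l; lra. }
  pose proof (Cmod_triangle (Cminus (f u) (f (RtoC 0))) (f (RtoC 0))).
  replace (Cplus (Cminus (f u) (f (RtoC 0))) (f (RtoC 0))) with (f u) in H2 by ring. lra.
Qed.

Lemma locLip_const (c : C) : locLip (fun _ => c).
Proof. intros B. exists 0. split; [lra|]. intros. replace (Cminus c c) with (RtoC 0) by ring.
  rewrite Cmod_0. pose proof (Cmod_ge_0 (Cminus u v)). lra. Qed.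

Lemma locLip_id : locLip (fun u => u).
Proof. intros B. exists 1. split; [lra|]. intros. lra. Qed.

Lemma locLip_conj : locLip Cconj.
Proof. intros B. exists 1. split; [lra|]. intros. rewrite <- Cminus_conj, Cmod_conj. lra. Qed.

Lemma locLip_plus f g : locLip f -> locLip g -> locLip (fun u => Cplus (f u) (g u)).
Proof.
  intros Hf Hg B. destruct (Hf B) as [L1 [H1 H1s]]. destruct (Hg B) as [L2 [H2 H2s]].
  exists (L1 + L2). split; [lra|]. intros u v Hu Hv.
  replace (Cminus (Cplus (f u) (g u)) (Cplus (f v) (g v))) with (Cplus (Cminus (f u) (f v)) (Cminus (g u) (g v))) by ring.
  eapply Rle_trans. apply Cmod_triangle. specialize (H1s u v Hu Hv). specialize (H2s u v Hu Hv). lra.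
Qed.

Lemma locLip_mult f g : locLip f -> locLip g -> locLip (fun u => Cmult (f u) (g u)).
Proof.
  intros Hf Hg B. destruct (Hf B) as [L1 [H1 H1s]]. destruct (Hg B) as [L2 [H2 H2s]].
  destruct (locLip_bounded f Hf B) as [M1 [HM1 HM1s]]. destruct (locLip_bounded g Hg B) as [M2 [HM2 HM2s]].
  exists (M1 * L2 + M2 * L1). split; [nra|]. intros u v Hu Hv.
  replace (Cminus (Cmult (f u) (g u)) (Cmult (f v) (g v))) with
    (Cplus (Cmult (f u) (Cminus (g u) (g v))) (Cmult (g v) (Cminus (f u) (f v)))) by ring.
  eapply Rle_trans. apply Cmod_triangle. rewrite !Cmod_mult.
  specialize (H1s u v Hu Hv). specialize (H2s u v Hu Hv). specialize (HM1s u Hu). specialize (HM2s v Hv).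
  pose proof (Cmod_ge_0 (f u)). pose proof (Cmod_ge_0 (g v)).
  pose proof (Cmod_ge_0 (Cminus (g u) (g v))). pose proof (Cmod_ge_0 (Cminus (f u) (f v))).
  pose proof (Cmod_ge_0 (Cminus u v)).
  assert (Cmod (f u) * Cmod (Cminus (g u) (g v)) <= M1 * (L2 * Cmod (Cminus u v))) by (apply Rmult_le_compat; auto).
  assert (Cmod (g v) * Cmod (Cminus (f u) (f v)) <= M2 * (L1 * Cmod (Cminus u v))) by (apply Rmult_le_compat; auto).
  nra.
Qed.

Lemma locLip_pow f n : locLip f -> locLip (fun u => Cpow (f u) n).
Proof. intros Hf. induction n; simpl. apply locLip_const. apply locLip_mult; auto. Qed.

Lemma locLip_csum n (F : nat -> C -> C) : (forall k, locLip (F k)) -> locLip (fun u => csum n (fun k => F k u)).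
Proof. intros H. induction n; simpl. apply H. apply locLip_plus; auto. Qed.

Lemma locLip_feval c N : locLip (feval c N).
Proof.
  unfold feval. apply (locLip_csum N (fun nu u => csum N (fun mu => Cmult (c nu mu) (Cmult (Cpow u nu) (Cpow (Cconj u) mu))))).
  intro nu. apply (locLip_csum N (fun mu u => Cmult (c nu mu) (Cmult (Cpow u nu) (Cpow (Cconj u) mu)))).
  intro mu. apply locLip_mult. apply locLip_const. apply locLip_mult. apply locLip_pow, locLip_id.
  apply locLip_pow, locLip_conj.
Qed.

Lemma locLip_fhom c N l : locLip (fhom c N l).
Proof.
  unfold fhom. apply (locLip_csum N (fun nu u => csum N (fun mu => if Nat.eqb (nu + mu) l
     then Cmult (c nu mu) (Cmult (Cpow u nu) (Cpow (Cconj u) mu)) else RtoC 0))).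
  intro nu. apply (locLip_csum N (fun mu u => if Nat.eqb (nu + mu) l
     then Cmult (c nu mu) (Cmult (Cpow u nu) (Cpow (Cconj u) mu)) else RtoC 0)).
  intro mu. destruct (Nat.eqb (nu + mu) l). 
  apply locLip_mult. apply locLip_const. apply locLip_mult. apply locLip_pow, locLip_id.
  apply locLip_pow, locLip_conj. apply locLip_const.
Qed.

Lemma locLip_factored k p q fac : locLip (factored k p q fac).
Proof.
  unfold factored. apply locLip_mult.
  - apply locLip_mult. apply locLip_const. apply locLip_mult. apply locLip_pow, locLip_id. apply locLip_pow, locLip_conj.
  - induction fac as [|[g n] fac IH]; simpl. apply locLip_const.
    apply locLip_mult; auto. apply locLip_pow. apply locLip_plus. apply locLip_id.
    apply locLip_mult. apply locLip_const. apply locLip_conj.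
Qed.

Lemma circ_cont a r : cont (circ a r).
Proof. intro t. unfold circ. apply ccont_plus. apply ccont_const. apply ccont_mult. apply ccont_const.
  apply (ex_cont (2 * PI) t). Qed.

Lemma gcirc_cont G a r : locLip G -> cont (fun t => G (circ a r t)).
Proof. intros HG t. apply locLip_comp; auto. apply circ_cont. Qed.

Lemma Cmod_circ0 r t : 0 <= r -> Cmod (circ (RtoC 0) r t) = r.
Proof. intros Hr. unfold circ. replace (Cplus (RtoC 0) (Cmult (RtoC r) (cos (2 * PI * t), sin (2 * PI * t))))
  with (Cmult (RtoC r) (ex (2 * PI * t))) by (unfold ex; ring).
  rewrite Cmod_mult, Cmod_ex, Cmod_RtoC, Rabs_right; lra. Qed.

Lemma IsAng_circ_id r : 0 < r -> IsAng (fun t => circ (RtoC 0) r t) 0 1 (2 * PI).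
Proof.
  intros Hr. split; [lra|]. split.
  - intros t _ E. pose proof (Cmod_circ0 r t ltac:(lra)). rewrite E, Cmod_0 in H. lra.
  - exists (fun t => 2 * PI * t). split; [split|].
    + intro t. apply continuity_pt_mult. apply continuity_pt_const; intros u v; auto. apply continuity_pt_id.
    + intros t _. rewrite Cmod_circ0 by lra. unfold circ, ex. apply Ceq; simpl; ring.
    + ring.
Qed.

Lemma IsAng_pow g a b x n : IsAng g a b x -> IsAng (fun t => Cpow (g t) n) a b (INR n * x).
Proof.
  intros H. induction n.
  - simpl. replace (0 * x) with 0 by ring. apply IsAng_const. destruct H; auto.
    intro E. inversion E. lra.
  - rewrite S_INR. replace ((INR n + 1) * x) with (x + INR n * x) by ring.
    apply (IsAng_mult g (fun t => Cpow (g t) n)); auto.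
Qed.

Lemma IsAng_circ_conj r : 0 < r -> IsAng (fun t => Cconj (circ (RtoC 0) r t)) 0 1 (- (2 * PI)).
Proof. intros. apply (IsAng_conj (fun t => circ (RtoC 0) r t)). apply IsAng_circ_id; auto. Qed.

Lemma factor_circ (g : C) r : 0 < r -> Cmod g <> 1 ->
  IsAng (fun t => Cpow (Cplus (circ (RtoC 0) r t) (Cmult g (Cconj (circ (RtoC 0) r t)))) 1) 0 1
    (2 * PI * IZR (eps g)).
Proof.
  intros Hr Hg. eapply IsAng_ext with (g1 := fun t => Cplus (circ (RtoC 0) r t) (Cmult g (Cconj (circ (RtoC 0) r t)))).
  2: intros t _; simpl; ring.
  assert (Hc : cont (fun t => Cplus (circ (RtoC 0) r t) (Cmult g (Cconj (circ (RtoC 0) r t))))).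
  { apply (gcirc_cont (fun u => Cplus u (Cmult g (Cconj u)))). apply locLip_plus. apply locLip_id.
    apply locLip_mult. apply locLip_const. apply locLip_conj. }
  unfold eps. destruct (Rlt_dec (Cmod g) 1) as [Hlt|Hge].
  - replace (2 * PI * IZR 1) with (2 * PI) by (simpl; ring).
    apply IsAng_rouche_loop with (fun t => circ (RtoC 0) r t); auto.
    + apply IsAng_circ_id; auto.
    + apply circ_cont.
    + apply circ_closed.
    + rewrite circ_closed; auto.
    + intros t _. replace (Cminus (Cplus (circ (RtoC 0) r t) (Cmult g (Cconj (circ (RtoC 0) r t)))) (circ (RtoC 0) r t))
        with (Cmult g (Cconj (circ (RtoC 0) r t))) by ring.
      rewrite Cmod_mult, Cmod_conj, Cmod_circ0 by lra. pose proof (Cmod_ge_0 g). nra.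
  - destruct (Rgt_dec (Cmod g) 1) as [Hgt|Hn]; [|exfalso; lra].
    replace (2 * PI * IZR (-1)) with (0 + - (2 * PI)) by (simpl; ring).
    apply IsAng_rouche_loop with (fun t => Cmult g (Cconj (circ (RtoC 0) r t))); auto.
    + apply (IsAng_mult (fun _ => g) (fun t => Cconj (circ (RtoC 0) r t))).
      apply IsAng_const. lra. intro E. rewrite E, Cmod_0 in Hgt. lra. apply IsAng_circ_conj; auto.
    + apply (gcirc_cont (fun u => Cmult g (Cconj u))). apply locLip_mult. apply locLip_const. apply locLip_conj.
    + rewrite circ_closed; auto.
    + rewrite circ_closed; auto.
    + intros t _. replace (Cminus (Cplus (circ (RtoC 0) r t) (Cmult g (Cconj (circ (RtoC 0) r t)))) (Cmult g (Cconj (circ (RtoC 0) r t))))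
        with (circ (RtoC 0) r t) by ring.
      rewrite Cmod_mult, Cmod_conj, Cmod_circ0 by lra. nra.
Qed.

Lemma factor_circ1 (g : C) r : 0 < r -> Cmod g <> 1 ->
  IsAng (fun t => Cplus (circ (RtoC 0) r t) (Cmult g (Cconj (circ (RtoC 0) r t)))) 0 1
    (2 * PI * IZR (eps g)).
Proof. intros. pose proof (factor_circ g r H H0) as A. eapply IsAng_ext. apply A.
  intros t _. simpl. ring. Qed.

Definition facsum (fac : list (C * nat)%type) : Z :=
  fold_right (fun gn acc => (eps (fst gn) * Z.of_nat (snd gn) + acc)%Z) 0%Z fac.

Lemma fold_circ fac r : 0 < r -> admissible_fac fac ->
  IsAng (fun t => fold_right (fun gn acc =>
        Cmult (Cpow (Cplus (circ (RtoC 0) r t) (Cmult (fst gn) (Cconj (circ (RtoC 0) r t)))) (snd gn)) acc)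
      (RtoC 1) fac) 0 1 (2 * PI * IZR (facsum fac)).
Proof.
  intros Hr Had. induction fac as [|[g n] fac IH]; simpl.
  - replace (2 * PI * 0) with 0 by ring. apply IsAng_const. lra. intro E; inversion E; lra.
  - inversion Had as [|? ? Hg Hrest]; subst. simpl in Hg.
    pose proof (IsAng_pow _ _ _ _ n (factor_circ1 g r Hr Hg)) as A.
    specialize (IH Hrest).
    replace (2 * PI * IZR (eps g * Z.of_nat n + facsum fac)) with
      (INR n * (2 * PI * IZR (eps g)) + 2 * PI * IZR (facsum fac))
      by (rewrite plus_IZR, mult_IZR, <- INR_IZR_INZ; ring).
    apply (IsAng_mult _ (fun t => fold_right _ (RtoC 1) fac)); auto.
Qed.

Lemma factored_circ k p q fac r : 0 < r -> k <> RtoC 0 -> admissible_fac fac ->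
  IsAng (fun t => factored k p q fac (circ (RtoC 0) r t)) 0 1 (2 * PI * IZR (index_of_fac p q fac)).
Proof.
  intros Hr Hk Had. unfold factored.
  replace (2 * PI * IZR (index_of_fac p q fac)) with
    ((0 + (INR p * (2 * PI) + INR q * (- (2 * PI)))) + 2 * PI * IZR (facsum fac)).
  2: { unfold index_of_fac, facsum. rewrite !plus_IZR, minus_IZR, <- !INR_IZR_INZ. ring. }
  apply (IsAng_mult (fun t => Cmult k (Cmult (Cpow (circ (RtoC 0) r t) p) (Cpow (Cconj (circ (RtoC 0) r t)) q)))).
  - apply (IsAng_mult (fun _ => k)). apply IsAng_const; auto. lra.
    apply (IsAng_mult (fun t => Cpow (circ (RtoC 0) r t) p)).
    apply (IsAng_pow (fun t => circ (RtoC 0) r t)). apply IsAng_circ_id; auto.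
    apply (IsAng_pow (fun t => Cconj (circ (RtoC 0) r t))). apply IsAng_circ_conj; auto.
  - apply fold_circ; auto.
Qed.

Fixpoint rsum (n : nat) (F : nat -> R) : R :=
  match n with O => F O | S k => rsum k F + F (S k) end.

Lemma csum_minus n F G : Cminus (csum n F) (csum n G) = csum n (fun k => Cminus (F k) (G k)).
Proof. induction n; simpl; auto. rewrite <- IHn. ring. Qed.

Lemma Cmod_csum n F : Cmod (csum n F) <= rsum n (fun k => Cmod (F k)).
Proof. induction n; simpl. lra. eapply Rle_trans. apply Cmod_triangle. lra. Qed.

Lemma rsum_le n F G : (forall k, (k <= n)%nat -> F k <= G k) -> rsum n F <= rsum n G.
Proof. induction n; simpl; intros H. apply H; lia. apply Rplus_le_compat. apply IHn; intros; apply H; lia. apply H; lia. Qed.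

Lemma rsum_scal n F a : rsum n (fun k => F k * a) = rsum n F * a.
Proof. induction n; simpl; auto. rewrite IHn. ring. Qed.

Lemma rsum_ge0 n F : (forall k, 0 <= F k) -> 0 <= rsum n F.
Proof. induction n; simpl; intros H. apply H. pose proof (H (S n)). pose proof (IHn H). lra. Qed.

Lemma Cmod_mono u nu mu : Cmod (Cmult (Cpow u nu) (Cpow (Cconj u) mu)) = Cmod u ^ (nu + mu).
Proof. rewrite Cmod_mult, !Cmod_pow, Cmod_conj, pow_add. auto. Qed.

Definition Ssum (c : nat -> nat -> C) N := rsum N (fun nu => rsum N (fun mu => Cmod (c nu mu))).

Lemma Ssum_ge0 c N : 0 <= Ssum c N.
Proof. unfold Ssum. apply rsum_ge0. intro. apply rsum_ge0. intro. apply Cmod_ge_0. Qed.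

Lemma diff_eq c N l u : Cminus (feval c N u) (fhom c N l u) =
  csum N (fun nu => csum N (fun mu => if Nat.eqb (nu + mu) l then RtoC 0
     else Cmult (c nu mu) (Cmult (Cpow u nu) (Cpow (Cconj u) mu)))).
Proof.
  unfold feval, fhom. rewrite csum_minus. f_equal. apply functional_extensionality. intro nu.
  rewrite csum_minus. f_equal. apply functional_extensionality. intro mu.
  destruct (Nat.eqb (nu + mu) l); ring.
Qed.



Lemma pow_le_exp x m n : 1 <= x -> (m <= n)%nat -> x ^ m <= x ^ n.
Proof. intros. apply Rle_pow; auto. Qed.

Lemma pow_le_exp_small x m n : 0 <= x <= 1 -> (m <= n)%nat -> x ^ n <= x ^ m.
Proof.
  intros Hx Hmn. induction Hmn. lra. simpl. pose proof (pow_le x m0 ltac:(lra)). nra.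
Qed.

Lemma top_bound c N d u : mixed_supported c N -> is_top_degree c d -> 1 <= Cmod u ->
  Cmod (Cminus (feval c N u) (fhom c N d u)) * Cmod u <= Ssum c N * Cmod u ^ d.
Proof.
  intros Hs [_ Htop] Hu. rewrite diff_eq. unfold Ssum. rewrite <- rsum_scal.
  eapply Rle_trans. apply Rmult_le_compat_r. lra. apply Cmod_csum. rewrite <- rsum_scal.
  apply rsum_le. intros nu Hnu.
  eapply Rle_trans. apply Rmult_le_compat_r. lra. apply Cmod_csum. rewrite <- !rsum_scal.
  apply rsum_le. intros mu Hmu.
  destruct (Nat.eqb (nu + mu) d) eqn:E.
  - rewrite Cmod_0. pose proof (Cmod_ge_0 (c nu mu)). pose proof (pow_le (Cmod u) d ltac:(lra)). nra.
  - rewrite Cmod_mult, Cmod_mono. destruct (Ceq_dec (c nu mu) (RtoC 0)) as [Z0|NZ].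
    + rewrite Z0, Cmod_0. lra.
    + pose proof (Htop nu mu NZ). apply Nat.eqb_neq in E.
      assert (Cmod u ^ (nu + mu) * Cmod u <= Cmod u ^ d).
      { replace (Cmod u ^ (nu + mu) * Cmod u) with (Cmod u ^ S (nu + mu)) by (simpl; ring).
        apply pow_le_exp; auto. lia. }
      pose proof (Cmod_ge_0 (c nu mu)). rewrite Rmult_assoc. apply Rmult_le_compat_l; auto.
Qed.

Lemma bottom_bound c N d u : mixed_supported c N -> is_bottom_degree c d -> Cmod u <= 1 ->
  Cmod (Cminus (feval c N u) (fhom c N d u)) <= Ssum c N * Cmod u ^ (S d).
Proof.
  intros Hs [_ Hbot] Hu. pose proof (Cmod_ge_0 u). rewrite diff_eq. unfold Ssum. rewrite <- rsum_scal.
  eapply Rle_trans. apply Cmod_csum.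
  apply rsum_le. intros nu Hnu.
  eapply Rle_trans. apply Cmod_csum. rewrite <- !rsum_scal.
  apply rsum_le. intros mu Hmu.
  destruct (Nat.eqb (nu + mu) d) eqn:E.
  - rewrite Cmod_0. pose proof (Cmod_ge_0 (c nu mu)). pose proof (pow_le (Cmod u) (S d) ltac:(lra)). nra.
  - rewrite Cmod_mult, Cmod_mono. destruct (Ceq_dec (c nu mu) (RtoC 0)) as [Z0|NZ].
    + rewrite Z0, Cmod_0. pose proof (pow_le (Cmod u) (S d) ltac:(lra)). lra.
    + pose proof (Hbot nu mu NZ). apply Nat.eqb_neq in E.
      assert (Cmod u ^ (nu + mu) <= Cmod u ^ S d) by (apply pow_le_exp_small; [lra|lia]).
      pose proof (Cmod_ge_0 (c nu mu)). apply Rmult_le_compat_l; auto.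
Qed.

Lemma Cmod_rev (a b : C) : Cmod a - Cmod b <= Cmod (Cplus a b).
Proof. pose proof (Cmod_triangle (Cplus a b) (Copp b)). replace (Cplus (Cplus a b) (Copp b)) with a in H by ring.
  rewrite Cmod_opp in H. lra. Qed.

Lemma factor_lower (g u : C) : Rabs (1 - Cmod g) * Cmod u <= Cmod (Cplus u (Cmult g (Cconj u))).
Proof.
  pose proof (Cmod_rev u (Cmult g (Cconj u))). pose proof (Cmod_rev (Cmult g (Cconj u)) u).
  rewrite Cplus_comm in H0. rewrite Cmod_mult, Cmod_conj in H, H0.
  pose proof (Cmod_ge_0 u). unfold Rabs; destruct Rcase_abs; nra.
Qed.

Definition mfac (fac : list (C * nat)%type) : R :=
  fold_right (fun gn acc => Rabs (1 - Cmod (fst gn)) ^ snd gn * acc) 1 fac.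
Definition Dfac (fac : list (C * nat)%type) : nat :=
  fold_right (fun gn acc => (snd gn + acc)%nat) 0%nat fac.

Definition ffold (fac : list (C * nat)%type) (u : C) : C :=
  fold_right (fun gn acc => Cmult (Cpow (Cplus u (Cmult (fst gn) (Cconj u))) (snd gn)) acc) (RtoC 1) fac.

Lemma mfac_pos fac : admissible_fac fac -> 0 < mfac fac.
Proof.
  induction fac as [|[g n] fac IH]; simpl; intros H. lra.
  inversion H as [|? ? Hg Hr]; subst. simpl in Hg. apply Rmult_lt_0_compat; auto.
  apply pow_lt. apply Rabs_pos_lt. lra.
Qed.

Lemma mfac_ge0 fac : 0 <= mfac fac.
Proof. induction fac as [|[g n] fac IH]; simpl. lra. apply Rmult_le_pos; auto. apply pow_le, Rabs_pos. Qed.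

Lemma ffold_lower fac u : mfac fac * Cmod u ^ Dfac fac <= Cmod (ffold fac u).
Proof.
  induction fac as [|[g n] fac IH]; simpl.
  - rewrite Cmod_1. lra.
  - unfold ffold in IH. rewrite Cmod_mult, Cmod_pow. rewrite pow_add.
    pose proof (factor_lower g u). pose proof (Cmod_ge_0 u).
    assert (0 <= Rabs (1 - Cmod g) * Cmod u) by (pose proof (Rabs_pos (1 - Cmod g)); nra).
    assert ((Rabs (1 - Cmod g) * Cmod u) ^ n <= Cmod (Cplus u (Cmult g (Cconj u))) ^ n) by (apply pow_incr; lra).
    rewrite Rpow_mult_distr in H2.
    assert (0 <= mfac fac * Cmod u ^ Dfac fac).
    { apply Rmult_le_pos. apply mfac_ge0. apply pow_le; auto. }
    pose proof (pow_le (Rabs (1 - Cmod g)) n (Rabs_pos _)). pose proof (pow_le (Cmod u) n H0).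
    pose proof (Cmod_ge_0 (ffold fac u)).
    apply Rle_trans with ((Rabs (1 - Cmod g) ^ n * Cmod u ^ n) * (mfac fac * Cmod u ^ Dfac fac)). right; ring.
    apply Rmult_le_compat; auto. apply Rmult_le_pos; auto.
Qed.

Lemma factored_ffold k p q fac u :
  factored k p q fac u = Cmult (Cmult k (Cmult (Cpow u p) (Cpow (Cconj u) q))) (ffold fac u).
Proof. reflexivity. Qed.

Lemma factored_lower k p q fac u :
  Cmod k * mfac fac * Cmod u ^ (p + q + Dfac fac) <= Cmod (factored k p q fac u).
Proof.
  rewrite factored_ffold, !Cmod_mult, !Cmod_pow, Cmod_conj, !pow_add.
  pose proof (ffold_lower fac u). pose proof (Cmod_ge_0 k). pose proof (Cmod_ge_0 u).
  pose proof (pow_le (Cmod u) p H1). pose proof (pow_le (Cmod u) q H1).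
  apply Rle_trans with ((Cmod k * (Cmod u ^ p * Cmod u ^ q)) * (mfac fac * Cmod u ^ Dfac fac)). right; ring.
  apply Rmult_le_compat_l. apply Rmult_le_pos; auto. apply Rmult_le_pos; auto. auto.
Qed.

Lemma csum_scal n (F : nat -> C) a : csum n (fun k => Cmult a (F k)) = Cmult a (csum n F).
Proof. induction n; simpl; auto. rewrite IHn. ring. Qed.

Lemma Cpow_RtoC x n : Cpow (RtoC x) n = RtoC (x ^ n).
Proof. induction n; simpl; auto. rewrite IHn. apply Ceq; simpl; ring. Qed.

Lemma Cconj_RtoC x : Cconj (RtoC x) = RtoC x.
Proof. apply Ceq; simpl; ring. Qed.

Lemma fhom_real c N l x : fhom c N l (RtoC x) = Cmult (RtoC (x ^ l)) (fhom c N l (RtoC 1)).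
Proof.
  unfold fhom. rewrite <- csum_scal. f_equal. apply functional_extensionality. intro nu.
  rewrite <- csum_scal. f_equal. apply functional_extensionality. intro mu.
  destruct (Nat.eqb (nu + mu) l) eqn:E.
  - apply Nat.eqb_eq in E. rewrite !Cconj_RtoC, !Cpow_RtoC. rewrite <- E, pow_add.
    rewrite !pow1. apply Ceq; simpl; ring.
  - apply Ceq; simpl; ring.
Qed.

Lemma ffold_cons g n fac u : ffold ((g, n) :: fac) u = Cmult (Cpow (Cplus u (Cmult g (Cconj u))) n) (ffold fac u).
Proof. reflexivity. Qed.

Lemma ffold_real fac x : ffold fac (RtoC x) = Cmult (RtoC (x ^ Dfac fac)) (ffold fac (RtoC 1)).
Proof.
  induction fac as [|[g n] fac IH].
  - simpl. apply Ceq; simpl; ring.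
  - rewrite !ffold_cons, IH. cbn [Dfac fold_right snd]. fold (Dfac fac). rewrite !Cconj_RtoC.
    replace (Cplus (RtoC x) (Cmult g (RtoC x))) with (Cmult (RtoC x) (Cplus (RtoC 1) (Cmult g (RtoC 1)))) by ring.
    rewrite Cpow_mult_l, Cpow_RtoC, pow_add. replace (RtoC (x ^ n * x ^ Dfac fac)) with
      (Cmult (RtoC (x ^ n)) (RtoC (x ^ Dfac fac))) by (apply Ceq; simpl; ring). ring.
Qed.

Lemma factored_real k p q fac x :
  factored k p q fac (RtoC x) = Cmult (RtoC (x ^ (p + q + Dfac fac))) (factored k p q fac (RtoC 1)).
Proof.
  rewrite !factored_ffold, ffold_real, !Cconj_RtoC, !Cpow_RtoC, !pow_add, !pow1.
  replace (RtoC (x ^ p * x ^ q * x ^ Dfac fac)) with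
      (Cmult (Cmult (RtoC (x ^ p)) (RtoC (x ^ q))) (RtoC (x ^ Dfac fac))) by (apply Ceq; simpl; ring).
  apply Ceq; simpl; ring.
Qed.

Lemma pow2_inj m n : 2 ^ m = 2 ^ n -> m = n.
Proof.
  intros H. destruct (Nat.lt_trichotomy m n) as [Hl|[He|Hg]]; auto.
  - pose proof (Rlt_pow 2 m n ltac:(lra) Hl). lra.
  - pose proof (Rlt_pow 2 n m ltac:(lra) Hg). lra.
Qed.

Lemma deg_eq c N l k p q fac : (forall u, fhom c N l u = factored k p q fac u) ->
  k <> RtoC 0 -> admissible_fac fac -> l = (p + q + Dfac fac)%nat.
Proof.
  intros Heq Hk Had.
  set (X := factored k p q fac (RtoC 1)).
  assert (HX : X <> RtoC 0).
  { intro E. pose proof (factored_lower k p q fac (RtoC 1)). fold X in H. rewrite E, Cmod_1, Cmod_0, pow1 in H.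
    pose proof (mfac_pos fac Had). assert (0 < Cmod k) by (apply Cmod_gt_0; auto). nra. }
  pose proof (fhom_real c N l 2). rewrite !Heq, factored_real in H. fold X in H.
  apply (f_equal Cmod) in H. rewrite !Cmod_mult, !Cmod_RtoC in H.
  assert (0 < Cmod X) by (apply Cmod_gt_0; auto).
  rewrite !Rabs_right in H by (apply Rle_ge, pow_le; lra).
  apply pow2_inj. apply Rmult_eq_reg_r with (Cmod X); lra.
Qed.

Lemma SA_rouche f g z w : locLip f -> locLip g -> segnz g z w ->
  (forall s, 0 <= s <= 1 -> Cmod (Cminus (f (seg z w s)) (g (seg z w s))) < Cmod (g (seg z w s))) ->
  SA f z w = SA g z w + Pa (Cmult (f w) (Cconj (g w))) - Pa (Cmult (f z) (Cconj (g z))).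
Proof.
  intros Hf Hg Hnz Hr. apply Ang_eq.
  pose proof (IsAng_rouche _ _ 0 1 _ (SA_spec g z w Hg Hnz) (fseg_cont g z w Hg) (fseg_cont f z w Hf) Hr) as H.
  cbv beta in H. rewrite seg_0, seg_1 in H. auto.
Qed.

Lemma RW_rouche f g x0 x1 y0 y1 : locLip f -> locLip g -> x0 <= x1 -> y0 <= y1 -> bdnz g x0 x1 y0 y1 ->
  (forall x y, x0 <= x <= x1 -> y0 <= y <= y1 -> (x = x0 \/ x = x1 \/ y = y0 \/ y = y1) ->
     Cmod (Cminus (f (x, y)) (g (x, y))) < Cmod (g (x, y))) ->
  RW f x0 x1 y0 y1 = RW g x0 x1 y0 y1.
Proof.
  intros Hf Hg Hx Hy B Hb. unfold RW.
  rewrite (SA_rouche f g (x0, y0) (x1, y0)), (SA_rouche f g (x1, y0) (x1, y1)),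
    (SA_rouche f g (x1, y1) (x0, y1)), (SA_rouche f g (x0, y1) (x0, y0)); auto; try ring.
  all: try (intros s Hs; first [rewrite seg_h | rewrite seg_v]; apply Hb; [nra|nra|tauto]).
  all: try (apply (segnz_h g x0 x1 y0 y1); auto; tauto).
  all: try (apply (segnz_v g x0 x1 y0 y1); auto; tauto).
Qed.

Lemma IZR_2PI a b : 2 * PI * IZR a = 2 * PI * IZR b -> a = b.
Proof. intros H. pose proof PI_RGT_0. apply eq_IZR. nra. Qed.

Theorem part2 (c : nat -> nat -> C) (N : nat) (Hc : mixed_supported c N) :
  forall (dlow a b : nat) (k : C) (fac : list (C * nat)%type),
     is_bottom_degree c dlow ->
     valid_factorization k fac ->
     (forall u, fhom c N dlow u = factored k a b fac u) ->
     admissible_fac fac ->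
     feval c N (RtoC 0) = RtoC 0 ->
     sm (feval c N) (RtoC 0) = index_of_fac a b fac.
Proof.
  intros d a b k fac Hbot [Hk _] Hfac Had _.
  pose proof (deg_eq c N d k a b fac Hfac Hk Had) as Hd.
  set (m := Cmod k * mfac fac).
  assert (Hm : 0 < m) by (unfold m; apply Rmult_lt_0_compat; [apply Cmod_gt_0; auto| apply mfac_pos; auto]).
  set (S := Ssum c N). pose proof (Ssum_ge0 c N) as HS. fold S in HS.
  apply sm_eq. exists (Rmin 1 (m / (S + 1))). split.
  { apply Rmin_pos. lra. apply Rdiv_lt_0_compat; lra. }
  intros r Hr. pose proof (Rmin_l 1 (m / (S + 1))). pose proof (Rmin_r 1 (m / (S + 1))).
  apply cd_of_IsAng.
  apply IsAng_rouche_loop with (fun t => factored k a b fac (circ (RtoC 0) r t)).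
  - apply factored_circ; auto. lra.
  - apply gcirc_cont, locLip_factored.
  - apply gcirc_cont, locLip_feval.
  - rewrite circ_closed; auto.
  - rewrite circ_closed; auto.
  - intros t _. cbv beta. set (u := circ (RtoC 0) r t). assert (Hu : Cmod u = r) by (apply Cmod_circ0; lra).
    rewrite <- Hfac at 1. eapply Rle_lt_trans. apply bottom_bound; auto. lra.
    eapply Rlt_le_trans; [|apply factored_lower]. rewrite <- Hd. fold m. rewrite Hu.
    simpl. assert (S * r < m).
    { apply Rle_lt_trans with ((S + 1) * r). nra.
      apply Rmult_lt_reg_r with (/ (S + 1)). apply Rinv_0_lt_compat; lra.
      replace ((S + 1) * r * / (S + 1)) with r by (field; lra). unfold Rdiv in H0. lra. }
    fold S. pose proof (pow_lt r d ltac:(lra)). nra.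
Qed.

Definition Vb (V : list C) : R := fold_right (fun z acc => Cmod z + acc) 0 V.

Lemma Vb_ge0 V : 0 <= Vb V.
Proof. induction V; simpl. lra. pose proof (Cmod_ge_0 a). lra. Qed.

Lemma Vb_in V z : In z V -> Cmod z <= Vb V.
Proof. induction V; simpl; intros H. contradiction. pose proof (Vb_ge0 V). pose proof (Cmod_ge_0 a).
  destruct H. subst; lra. specialize (IHV H). lra. Qed.

Theorem part1 (c : nat -> nat -> C) (N : nat) (Hc : mixed_supported c N) :
  forall (dbar p q : nat) (k : C) (fac : list (C * nat)%type),
     is_top_degree c dbar ->
     valid_factorization k fac ->
     (forall u, fhom c N dbar u = factored k p q fac u) ->
     admissible_fac fac ->
     forall V : list C, NoDup V ->
       (forall z, feval c N z = RtoC 0 <-> In z V) ->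
       SM (feval c N) V = index_of_fac p q fac.
Proof.
  intros d p q k fac Htop [Hk _] Hfac Had V Hnd HV.
  pose proof (deg_eq c N d k p q fac Hfac Hk Had) as Hd.
  set (m := Cmod k * mfac fac).
  assert (Hm : 0 < m) by (unfold m; apply Rmult_lt_0_compat; [apply Cmod_gt_0; auto| apply mfac_pos; auto]).
  set (S := Ssum c N). pose proof (Ssum_ge0 c N) as HS. fold S in HS.
  set (R := 1 + S / m + Vb V).
  assert (HR1 : 1 <= R /\ S < m * R /\ forall z, In z V -> Cmod z < R).
  { pose proof (Vb_ge0 V). assert (0 <= S / m) by (apply Rdiv_le_0_compat; lra).
    split; [unfold R; lra|]. split.
    - unfold R. assert (m * (S / m) = S) by (field; lra). nra.
    - intros z Hz. pose proof (Vb_in V z Hz). unfold R; lra. }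
  destruct HR1 as [HR1 [HR2 HR3]].
  set (f := feval c N). set (g := fhom c N d).
  assert (Lf : locLip f) by apply locLip_feval.
  assert (Lg : locLip g) by apply locLip_fhom.
  assert (glow : forall u, m * Cmod u ^ d <= Cmod (g u)).
  { intro u. unfold g. rewrite Hfac, Hd. apply factored_lower. }
  assert (gnz : forall u, u <> RtoC 0 -> g u <> RtoC 0).
  { intros u Hu E. pose proof (glow u). rewrite E, Cmod_0 in H. assert (0 < Cmod u) by (apply Cmod_gt_0; auto).
    pose proof (pow_lt (Cmod u) d H0). nra. }
  assert (Hbig : forall u, R <= Cmod u -> Cmod (Cminus (f u) (g u)) < Cmod (g u)).
  { intros u Hu. pose proof (top_bound c N d u Hc Htop ltac:(lra)). fold S f g in H.
    pose proof (glow u). assert (0 < Cmod u) by lra. pose proof (pow_lt (Cmod u) d H1).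
    assert (Cmod (Cminus (f u) (g u)) * Cmod u < Cmod (g u) * Cmod u).
    { eapply Rle_lt_trans. apply H. apply Rlt_le_trans with (m * Cmod u * Cmod u ^ d). 
      assert (S < m * Cmod u) by nra. nra. nra. }
    nra. }
  assert (Hfar : forall x y, (x = 0 - R \/ x = 0 + R \/ y = 0 - R \/ y = 0 + R) -> R <= Cmod (x, y)).
  { intros x y Hb. pose proof (Cmod_fst (x, y)) as C1. pose proof (Cmod_snd (x, y)) as C2. cbn [fst snd] in C1, C2.
    assert (A1 : Rabs (0 - R) = R) by (rewrite Rabs_left; lra).
    assert (A2 : Rabs (0 + R) = R) by (rewrite Rabs_right; lra).
    destruct Hb as [E|[E|[E|E]]]; subst; lra. }
  assert (M : RW f (0 - R) (0 + R) (0 - R) (0 + R) = 2 * PI * IZR (SM f V)).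
  { apply (main_rect f Lf (length V)); auto; try lra.
    - intros x y _ _ E. apply HV. auto.
    - intros z Hz. pose proof (HR3 z Hz). pose proof (Cmod_fst z). pose proof (Cmod_snd z).
      unfold Rabs in *. destruct (Rcase_abs (fst z)), (Rcase_abs (snd z)); lra. }
  assert (E1 : RW f (0 - R) (0 + R) (0 - R) (0 + R) = RW g (0 - R) (0 + R) (0 - R) (0 + R)).
  { apply RW_rouche; auto; try lra.
    - intros x y _ _ Hb. apply gnz. intro E. pose proof (Hfar x y Hb). rewrite E, Cmod_0 in H. lra. }
  assert (E2 : RW g (0 - R) (0 + R) (0 - R) (0 + R) = 2 * PI * IZR (index_of_fac p q fac)).
  { assert (SQg : SQ g (RtoC 0) R).
    { intros x y _ _ Hne. apply gnz; auto. }
    pose proof (circle_sq g (RtoC 0) R R Lg ltac:(lra) SQg) as A. cbn [fst snd RtoC] in A.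
    apply (IsAng_uniq _ _ _ _ _ A).
    apply IsAng_ext with (fun t => factored k p q fac (circ (RtoC 0) R t)).
    apply factored_circ; auto; lra.
    intros t _. unfold g. rewrite Hfac. auto. }
  apply IZR_2PI. rewrite <- M, E1, E2. auto.
Qed.


Theorem theorem12 (c : nat -> nat -> C) (N : nat) (Hc : mixed_supported c N) :
  (* (1) *)
  (forall (dbar p q : nat) (k : C) (fac : list (C * nat)%type),
     is_top_degree c dbar ->
     valid_factorization k fac ->
     (forall u, fhom c N dbar u = factored k p q fac u) ->
     admissible_fac fac ->
     forall V : list C, NoDup V ->
       (forall z, feval c N z = RtoC 0 <-> In z V) ->
       SM (feval c N) V = index_of_fac p q fac) /\
  (* (2) *)
  (forall (dlow a b : nat) (k : C) (fac : list (C * nat)%type),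
     is_bottom_degree c dlow ->
     valid_factorization k fac ->
     (forall u, fhom c N dlow u = factored k a b fac u) ->
     admissible_fac fac ->
     feval c N (RtoC 0) = RtoC 0 ->
     sm (feval c N) (RtoC 0) = index_of_fac a b fac).
Proof.
  split.
  - apply part1; auto.
  - apply part2; auto.
Qed.
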